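(* (1) Every centric hexagon $\mathcal H$ of $\hat{\mathcal X}$ with center $n_0$ is of the form $\mathcal H=S\setminus H_0$ (with the induced subgraph of $\hat\Gamma$), where $S\subseteq Q$ is such that $Q(S)$ is an $\mathbb F_2$-subgeometry of $Q$ isomorphic to $Q^+(3,2)$ and $n_0\in\langle S\rangle_{\mathbb F_2}$. (2) Every centric cube $C$ of $\hat{\mathcal X}$ with center $n_0$ is of the form $C=S\setminus H_0$, where $Q(S)$ is an $\mathbb F_2$-subgeometry of $Q$ isomorphic to $Q(4,2)$ and $n_0\in\langle S\rangle_{\mathbb F_2}$. (3) Every centric dodecade $D$ of $\hat{\mathcal X}$ with center $n_0$ is of the form $D=S\setminus H_0$, where $Q(S)$ is an $\mathbb F_2$-subgeometry of $Q$ isomorphic to $Q^-(5,2)$ and $n_0\in\langle S\rangle_{\mathbb F_2}$.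
   Context: Let $q=2^n$, $V=V(6,q)$, and let $Q=Q^-(5,q)$ be the set of singular points of a non-degenerate quadratic form $f$ of Witt index $2$ on $V$, a generalized quadrangle of order $(q,q^2)$ whose lines are the totally singular lines; $\perp$ is the polarity defined by the bilinear form of $f$. Let $H_0$ be a hyperplane with $Q_0:=Q\cap H_0\cong Q(4,q)$ parabolic, and $n_0:=H_0^\perp$ (so $H_0=n_0^\perp$). $\hat{\mathcal X}$ is the geometry with points $Q\setminus Q_0$ and lines $l\setminus\{l\cap Q_0\}$ for lines $l$ of $Q$ not in $Q_0$; $\hat\Gamma$ is its collinearity graph. For $k\ge3$, a centric $2k$-configuration of $\hat{\mathcal X}$ with center $n_0$ is a set of $2k$ points $\{x_i^a: i=1,\dots,k,\ a=1,2\}$ of $Q\setminus Q_0$ such that $x_i^a,x_j^b$ are adjacent in $\hat\Gamma$ iff $i\ne j$ and $a\ne b$, and each projective line through $x_i^1,x_i^2$ passes through $n_0$; it is a centric hexagon, cube, dodecade for $k=3,4,6$. For $S\subseteq\mathrm{PG}(V)$, there is a unique smallest subfield $\mathbb F_S$ of $\mathbb F_q$ such that $S$ is contained in a projective subgeometry of $\mathrm{PG}(V)$ defined over $\mathbb F_S$ (the set of points, in some subspace, admitting coordinates in $\mathbb F_S$ with respect to a suitable basis), and among such subgeometries there is a smallest one, denoted $\langle S\rangle_{\mathbb F_S}$. For $S\subseteq Q$, $Q(S)$ is the point-line geometry with point set $S$ and lines the sets $l\cap S$, $l$ a line of $Q$ with $|l\cap S|\ge2$; $Q(S)$ is an $\mathbb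 F_2$-subgeometry if $\mathbb F_S=\mathbb F_2$. $Q^+(3,2)$, $Q(4,2)$, $Q^-(5,2)$ denote the classical generalized quadrangles of orders $(2,1)$, $(2,2)$, $(2,4)$. *)

(* Defs.v *)
From HB Require Import structures.
From mathcomp Require Import all_boot all_order all_algebra all_field.
Set Implicit Arguments. Unset Strict Implicit. Unset Printing Implicit Defensive.
Import GRing.Theory.
Local Open Scope ring_scope.

Section Defs.
Variable F : finFieldType.

Definition qf (C : 'M[F]_6) (v : 'rV[F]_6) : F := (v *m C *m v^T) 0 0.
(* Its polar (associated bilinear) form b(u,v) = f(u+v) - f(u) - f(v). *)
Definition bf (C : 'M[F]_6) (u v : 'rV[F]_6) : F := (u *m (C + C^T) *m v^T) 0 0.

Definition qf_nondeg (C : 'M[F]_6) : Prop :=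
  forall x, (forall y, bf C x y = 0) -> qf C x = 0 -> x = 0.

Definition totsing (C : 'M[F]_6) m (W : 'M[F]_(m, 6)) : bool :=
  [forall v : 'rV[F]_6, (v <= W)%MS ==> (qf C v == 0)].

Definition witt_index2 (C : 'M[F]_6) : Prop :=
  (exists W : 'M[F]_6, totsing C W /\ \rank W = 2%N) /\
  (forall W : 'M[F]_6, totsing C W -> (\rank W <= 2)%N).

Definition perpmx (C : 'M[F]_6) m (W : 'M[F]_(m, 6)) : 'M[F]_6 :=
  kermx ((C + C^T) *m W^T).

(* The restriction of f to the hyperplane H is non-degenerate, i.e.
   Q /\ H is a non-degenerate (= parabolic) quadric of PG(H). *)
Definition parabolic_section (C : 'M[F]_6) (H : 'M[F]_6) : Prop :=
  forall x, (x <= H)%MS -> (forall y, (y <= H)%MS -> bf C x y = 0) ->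
    qf C x = 0 -> x = 0.

(* Points of PG(V): 1-dimensional subspaces, in canonical form. *)
Definition is_ppoint (A : 'M[F]_6) : bool := (\rank A == 1)%N && (genmx A == A).
Definition ppoint := {A : 'M[F]_6 | is_ppoint A}.

Definition qpoint (C : 'M[F]_6) (p : ppoint) : bool := totsing C (val p).
Definition qline (C : 'M[F]_6) (L : 'M[F]_6) : bool := totsing C L && (\rank L == 2)%N.
(* Adjacency in the collinearity graph of hat X (for points of Q \ H0):
   distinct and spanning a totally singular line. *)
Definition adj (C : 'M[F]_6) (p q : ppoint) : bool :=
  (p != q) && totsing C (val p + val q)%MS.

Definition QS_line (C : 'M[F]_6) (S T : {set ppoint}) : Prop :=
  exists L : 'M[F]_6, qline C L /\ T = [set p in S | (val p <= L)%MS] /\ (2 <= #|T|)%N.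

(* The projective subgeometry over F_2 determined by the basis e of a subspace. *)
Definition F2pts m (e : 'M[F]_(m, 6)) : {set ppoint} :=
  [set p : ppoint | [exists c : 'rV[F]_m,
     [&& c != 0, [forall j, (c 0 j == 0) || (c 0 j == 1)] & val p == <<c *m e>>%MS]]].
Definition is_F2_subgeom (G : {set ppoint}) : Prop :=
  exists m (e : 'M[F]_(m, 6)), row_free e /\ G = F2pts e.

(* F_S = F_2: S lies in some F_2-subgeometry. *)
Definition F2_subgeometry (S : {set ppoint}) : Prop :=
  exists G, is_F2_subgeom G /\ S \subset G.
Definition in_F2_span (p : ppoint) (S : {set ppoint}) : Prop :=
  forall G, is_F2_subgeom G -> S \subset G -> p \in G.

Definition centric (C H0 : 'M[F]_6) (n0 : ppoint) k (x : 'I_k -> 'I_2 -> ppoint) : Prop :=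
  [/\ (forall i a j b, x i a = x j b -> i = j /\ a = b),
      (forall i a, qpoint C (x i a) /\ ~~ (val (x i a) <= H0)%MS),
      (forall i a j b, adj C (x i a) (x j b) = (i != j) && (a != b)) &
      (forall i, (val n0 <= val (x i ord0) + val (x i ord_max))%MS)].

End Defs.

Definition model_pts n (qm : 'rV['F_2]_n -> 'F_2) : {set 'rV['F_2]_n} :=
  [set v | (v != 0) && (qm v == 0)].
Definition model_line n (qm : 'rV['F_2]_n -> 'F_2) (T : {set 'rV['F_2]_n}) : Prop :=
  exists u v, (u != 0) /\ (v != 0) /\ (u != v) /\ qm u = 0 /\ qm v = 0 /\
    qm (u + v) = 0 /\ T = [set u; v; u + v].

Definition qplus3 (v : 'rV['F_2]_4) : 'F_2 :=
  v ord0 (inord 0) * v ord0 (inord 1) + v ord0 (inord 2) * v ord0 (inord 3).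
Definition qpar4 (v : 'rV['F_2]_5) : 'F_2 :=
  v ord0 (inord 0) * v ord0 (inord 1) + v ord0 (inord 2) * v ord0 (inord 3)
  + v ord0 (inord 4) ^+ 2.
Definition qminus5 (v : 'rV['F_2]_6) : 'F_2 :=
  v ord0 (inord 0) * v ord0 (inord 1) + v ord0 (inord 2) * v ord0 (inord 3)
  + v ord0 (inord 4) ^+ 2 + v ord0 (inord 4) * v ord0 (inord 5) + v ord0 (inord 5) ^+ 2.

Definition iso_to_model (F : finFieldType) (C : 'M[F]_6) (S : {set ppoint F})
    n (qm : 'rV['F_2]_n -> 'F_2) : Prop :=
  exists phi : ppoint F -> 'rV['F_2]_n,
    [/\ {in S &, injective phi}, phi @: S = model_pts qm &
        forall T : {set ppoint F}, T \subset S ->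
          (QS_line C S T <-> model_line qm (phi @: T))].

Definition of_form (F : finFieldType) (C H0 : 'M[F]_6) (n0 : ppoint F) k
    (x : 'I_k -> 'I_2 -> ppoint F) n (qm : 'rV['F_2]_n -> 'F_2) : Prop :=
  exists S : {set ppoint F},
    [/\ S \subset [set p | qpoint C p], F2_subgeometry S, iso_to_model C S qm,
        in_F2_span n0 S &
        [set x i a | i : 'I_k, a : 'I_2] = [set p in S | ~~ (val p <= H0)%MS]].

(* Main.v *)
Require Import Defs.
From HB Require Import structures.
From mathcomp Require Import all_boot all_order all_algebra all_field.
From mathcomp Require Import ring.
Import GRing.Theory.
Local Open Scope ring_scope.
Set Implicit Arguments. Unset Strict Implicit. Unset Printing Implicit Defensive.
Section Basic.
Variable F : finFieldType.
Hypothesis hchar : 2%N \in [pchar F].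
Variable C : 'M[F]_6.

Lemma two0 : (2%:R : F) = 0. Proof. by move: hchar => /andP[_ /eqP]. Qed.
Lemma addxx (x : F) : x + x = 0.
Proof. by rewrite -mulr2n -mulr_natr two0 mulr0. Qed.
Lemma oppF (x : F) : - x = x.
Proof. by apply/eqP; rewrite eq_sym -subr_eq0 opprK addxx. Qed.
Lemma addvv n (v : 'rV[F]_n) : v + v = 0.
Proof. by rewrite -[v]scale1r -scalerDl addxx scale0r. Qed.
Lemma oppv n (v : 'rV[F]_n) : - v = v.
Proof. by apply/eqP; rewrite eq_sym -subr_eq0 opprK addvv. Qed.

Lemma mx11_eq0 (A : 'M[F]_1) : (A == 0) = (A 0 0 == 0).
Proof.
apply/eqP/eqP => [->|h]; first by rewrite mxE.
by apply/matrixP => i j; rewrite !ord1 h mxE.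
Qed.

Lemma tr00 (A : 'M[F]_1) : (A^T) 0 0 = A 0 0. Proof. by rewrite mxE. Qed.

Lemma trD n (u v : 'rV[F]_n) : (u + v)^T = u^T + v^T.
Proof. by apply/matrixP => i j; rewrite !mxE. Qed.
Lemma trZ n a (u : 'rV[F]_n) : (a *: u)^T = a *: u^T.
Proof. by apply/matrixP => i j; rewrite !mxE. Qed.

Lemma e00D (A B : 'M[F]_1) : (A + B) 0 0 = A 0 0 + B 0 0. Proof. by rewrite mxE. Qed.
Lemma e00Z a (A : 'M[F]_1) : (a *: A) 0 0 = a * A 0 0. Proof. by rewrite mxE. Qed.

Lemma bf_sym u v : bf C u v = bf C v u.
Proof.
rewrite /bf.
have -> : (u *m (C + C^T) *m v^T) 0 0 = ((u *m (C + C^T) *m v^T)^T) 0 0 by rewrite tr00.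
by rewrite !trmx_mul !trmxK linearD /= trmxK [C^T + C]addrC mulmxA.
Qed.

Lemma bfDl u v w : bf C (u + v) w = bf C u w + bf C v w.
Proof. by rewrite /bf !mulmxDl e00D. Qed.
Lemma bfDr u v w : bf C w (u + v) = bf C w u + bf C w v.
Proof. by rewrite /bf trD mulmxDr e00D. Qed.
Lemma bfZl a u w : bf C (a *: u) w = a * bf C u w.
Proof. by rewrite /bf -!scalemxAl e00Z. Qed.
Lemma bfZr a u w : bf C w (a *: u) = a * bf C w u.
Proof. by rewrite /bf trZ -scalemxAr e00Z. Qed.
Lemma bf0l u : bf C 0 u = 0. Proof. by rewrite /bf !mul0mx mxE. Qed.
Lemma bf0r u : bf C u 0 = 0. Proof. by rewrite /bf trmx0 mulmx0 mxE. Qed.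

Lemma qfD u v : qf C (u + v) = qf C u + qf C v + bf C u v.
Proof.
rewrite /qf /bf trD !mulmxDl !mulmxDr !e00D.
have -> : (v *m C *m u^T) 0 0 = (u *m C^T *m v^T) 0 0.
  have -> : (v *m C *m u^T) 0 0 = ((v *m C *m u^T)^T) 0 0 by rewrite tr00.
  by rewrite !trmx_mul !trmxK mulmxA.
rewrite mulmxDl e00D. ring.
Qed.
Lemma qfZ a u : qf C (a *: u) = a ^+ 2 * qf C u.
Proof. by rewrite /qf trZ -scalemxAl -scalemxAr e00Z -scalemxAl e00Z mulrA expr2. Qed.
Lemma qf0 : qf C 0 = 0. Proof. by rewrite /qf !mul0mx mxE. Qed.

Lemma bfxx u : bf C u u = 0.
Proof.
have := qfD u u; rewrite addvv qf0 addxx add0r => h; by rewrite -h.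
Qed.
End Basic.

Section Pts.
Variable F : finFieldType.
Hypothesis hchar : 2%N \in [pchar F].
Variable C : 'M[F]_6.

Lemma ppt_gen (v : 'rV[F]_6) : v != 0 -> is_ppoint <<v>>%MS.
Proof.
move=> hv; rewrite /is_ppoint genmx_id eqxx andbT.
by rewrite (eqmx_rank (introT eqmxP (genmxE v))) rank_rV hv.
Qed.

Definition mkpt (v : 'rV[F]_6) (hv : v != 0) : ppoint F :=
  exist (fun A => is_ppoint A) <<v>>%MS (ppt_gen hv).

Lemma pt_vec (p : ppoint F) : exists v : 'rV[F]_6, (v != 0) && (val p == <<v>>%MS).
Proof.
case: p => A /= /andP[/eqP rA /eqP gA].
have : A != 0 by rewrite -mxrank_eq0 rA.
have [i hi | h] := pickP (fun i => row i A != 0).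
  move=> _; exists (row i A); rewrite hi /=.
  have s : (row i A <= A)%MS by exact: row_sub.
  have e : (row i A == A)%MS.
    by rewrite -(mxrank_leqif_eq s) rA rank_rV hi.
  by rewrite -{1}gA; apply/eqP/genmxP; move: e => /andP[e1 e2]; apply/andP.
move=> /negP[]; apply/eqP/row_matrixP => i; rewrite row0.
by move: (h i) => /= /negbFE/eqP.
Qed.

Definition vp (p : ppoint F) : 'rV[F]_6 := xchoose (pt_vec p).
Lemma vpP p : vp p != 0 /\ val p = <<vp p>>%MS.
Proof. by have /andP[h1 /eqP h2] := xchooseP (pt_vec p). Qed.

Lemma mul11 (a : 'M[F]_1) n (u : 'rV[F]_n) : a *m u = a 0 0 *: u.
Proof. by rewrite {1}[a]mx11_scalar mul_scalar_mx. Qed.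

Lemma gen_eq (u v : 'rV[F]_6) : v != 0 ->
  (<<u>>%MS = <<v>>%MS) <-> exists2 a, a != 0 & u = a *: v.
Proof.
move=> hv; split.
  move/genmxP => /andP[/sub_rVP[a ->] svu]; exists a => //.
  apply/negP => /eqP a0; move: svu; rewrite a0 scale0r => /submx0null/eqP.
  by apply/negP.
by case=> a ha ->; apply/eq_genmx/eqmx_scale.
Qed.

Lemma sub_gen m (w : 'M[F]_(m, 6)) (v : 'rV[F]_6) : (w <= <<v>>)%MS = (w <= v)%MS.
Proof. by rewrite genmxE. Qed.

Lemma gen_sub m (w : 'M[F]_(m, 6)) (v : 'rV[F]_6) : (<<v>> <= w)%MS = (v <= w)%MS.
Proof. by rewrite genmxE. Qed.

Lemma totsing_gen v : totsing C <<v>>%MS = (qf C v == 0).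
Proof.
apply/forallP/eqP => [h | h w]; first by have := h v; rewrite sub_gen submx_refl => /eqP.
apply/implyP; rewrite sub_gen => /sub_rVP[a ->].
by rewrite qfZ h mulr0.
Qed.

Lemma totsing_gen2 u v : qf C u = 0 -> qf C v = 0 ->
  totsing C (<<u>> + <<v>>)%MS = (bf C u v == 0).
Proof.
move=> hu hv.
have E w : (w <= <<u>> + <<v>>)%MS = (w <= u + v)%MS.
  by rewrite (adds_eqmx (genmxE u) (genmxE v)).
apply/forallP/eqP => [h | h w].
  have := h (u + v); rewrite E addmx_sub_adds ?submx_refl //= qfD hu hv !add0r.
  by move/eqP.
apply/implyP; rewrite E => /sub_addsmxP[[a b] /= ->].
rewrite !mul11 qfD !qfZ bfZl bfZr hu hv h !mulr0 !addr0.
by [].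
Qed.
End Pts.

Section Perp.
Variable F : finFieldType.
Hypothesis hchar : 2%N \in [pchar F].
Variable C : 'M[F]_6.
Variables (H0 : 'M[F]_6) (n0 : ppoint F).
Hypothesis hH0 : \rank H0 = 5%N.
Hypothesis hn0 : (val n0 == perpmx C H0)%MS.

Lemma trB : (C + C^T)^T = C + C^T.
Proof. by apply/matrixP => i j; rewrite !mxE addrC. Qed.

Lemma perpH0 (n : 'rV[F]_6) : val n0 = <<n>>%MS -> (exists y, bf C y n != 0) ->
  forall v, (v <= H0)%MS = (bf C v n == 0).
Proof.
move=> hn [y hy] v.
set B := C + C^T.
have s1 : n *m (B *m H0^T) = 0.
  apply/sub_kermxP; apply: submx_trans (_ : (n <= val n0)%MS) _.
    by rewrite hn sub_gen submx_refl.
  by move/andP: hn0 => [].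
have s2 : (H0 <= kermx (B *m n^T))%MS.
  apply/sub_kermxP; apply: trmx_inj; rewrite !trmx_mul trmxK trB trmx0.
  by rewrite -mulmxA.
have nz : B *m n^T != 0.
  apply: contraNneq hy => h; by rewrite /bf -mulmxA h mulmx0 mxE.
have r1 : \rank (B *m n^T) = 1%N.
  apply/eqP; rewrite eqn_leq rank_leq_col lt0n mxrank_eq0 nz //.
have rK : \rank (kermx (B *m n^T)) = 5%N by rewrite mxrank_ker r1.
have e : (H0 == kermx (B *m n^T))%MS by rewrite -(mxrank_leqif_eq s2) hH0 rK.
by rewrite (eqmxP e) sub_kermx mulmxA mx11_eq0.
Qed.
End Perp.

Section Front.
Variable F : finFieldType.
Hypothesis hchar : 2%N \in [pchar F].
Variable C : 'M[F]_6.
Variables (H0 : 'M[F]_6) (n0 : ppoint F).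
Hypothesis hH0 : \rank H0 = 5%N.
Hypothesis hn0 : (val n0 == perpmx C H0)%MS.

Lemma front k (x : 'I_k -> 'I_2 -> ppoint F) (i0 : 'I_k) : centric C H0 n0 x ->
 exists c (n : 'rV[F]_6) (u : 'I_k -> 'rV[F]_6),
   [/\ c != 0, n != 0, val n0 = <<n>>%MS & (forall v, (v <= H0)%MS = (bf C v n == 0))] /\
   [/\ (forall i, qf C (u i) = 0), qf C n = c, (forall i, bf C (u i) n = c) &
   (forall i j, i != j -> bf C (u i) (u j) = c)] /\
   (forall i, val (x i ord0) = <<u i>>%MS /\ val (x i ord_max) = <<n + u i>>%MS).
Proof.
case=> hinj hpt hadj hcol.
have [nz hn] := vpP n0; set n := vp n0 in nz hn.
pose U i := vp (x i ord0); pose W i := vp (x i ord_max).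
have hU i : val (x i ord0) = <<U i>>%MS by case: (vpP (x i ord0)).
have hW i : val (x i ord_max) = <<W i>>%MS by case: (vpP (x i ord_max)).
have qU i : qf C (U i) = 0.
  by case: (hpt i ord0) => /=; rewrite /qpoint hU totsing_gen => /eqP.
have qW i : qf C (W i) = 0.
  by case: (hpt i ord_max) => /=; rewrite /qpoint hW totsing_gen => /eqP.
have bUW i : bf C (U i) (W i) != 0.
  have := hadj i ord0 i ord_max; rewrite eqxx /= /adj.
  have -> : x i ord0 != x i ord_max by apply/eqP => /hinj[_].
  by rewrite /= hU hW totsing_gen2 // => ->.
have dec i : exists ab : F * F, n == ab.1 *: U i + ab.2 *: W i.
  have : (n <= U i + W i)%MS.
    rewrite -(adds_eqmx (genmxE (U i)) (genmxE (W i))) -hU -hW.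
    apply: submx_trans (hcol i); by rewrite hn sub_gen submx_refl.
  by case/sub_addsmxP => [[a b] /= ->]; exists (a 0 0, b 0 0); rewrite !mul11.
pose al i := (xchoose (dec i)).1; pose be i := (xchoose (dec i)).2.
have hd i : n = al i *: U i + be i *: W i by apply/eqP; exact: (xchooseP (dec i)).
have bUn i : bf C (U i) n = be i * bf C (U i) (W i).
  by rewrite {1}(hd i) bfDr !bfZr bfxx // mulr0 add0r.
have bWn i : bf C (W i) n = al i * bf C (U i) (W i).
  by rewrite {1}(hd i) bfDr !bfZr bfxx // mulr0 addr0 bf_sym.
have perp : forall v, (v <= H0)%MS = (bf C v n == 0).
  apply: (@perpH0 F C H0 n0 hH0 hn0 n hn).
  have [a0|a0] := eqVneq (al i0) 0.
    exists (U i0); rewrite bUn mulf_neq0 //.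
    apply: contraNneq nz => b0; by rewrite (hd i0) a0 b0 !scale0r addr0.
  by exists (W i0); rewrite bWn mulf_neq0.
have beN i : be i != 0.
  have := (hpt i ord0).2; rewrite hU gen_sub perp bUn.
  by apply: contraNneq => ->; rewrite mul0r.
have alN i : al i != 0.
  have := (hpt i ord_max).2; rewrite hW gen_sub perp bWn.
  by apply: contraNneq => ->; rewrite mul0r.
pose u i := al i *: U i; pose w i := be i *: W i.
have hnuw i : n = u i + w i by exact: hd i.
have bun i : bf C (u i) n = qf C n.
  by rewrite (hnuw i) bfDr qfD bfxx // /u /w !qfZ qU qW !mulr0 !add0r.
have uw i j : i != j -> bf C (u i) (w j) = 0.
  move=> ij; have := hadj i ord0 j ord_max; rewrite ij /= /adj hU hW.
  rewrite totsing_gen2 // andbC => /andP[/eqP h _].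
  by rewrite /u /w bfZl bfZr h !mulr0.
exists (qf C n), n, u; split; [split => // | split].
- by rewrite -(bun i0) /u bfZl mulf_neq0 // -perp -gen_sub -hU; case: (hpt i0 ord0).
- split => //.
  + by move=> i; rewrite /u qfZ qU mulr0.
  + move=> i j ij.
    have -> : u j = n + w j by rewrite (hnuw j) -addrA addvv // addr0.
    by rewrite bfDr bun uw // addr0.
- move=> i; split.
  + by rewrite hU; apply/eq_genmx/eqmx_sym/eqmx_scale.
  + rewrite hW (hnuw i) addrC addrA addvv // add0r.
    by apply/eq_genmx/eqmx_sym/eqmx_scale.
Qed.
End Front.

Section Span.
Variable F : finFieldType.
Hypothesis hchar : 2%N \in [pchar F].

Definition in01 m (a : 'rV[F]_m) := forall j, a 0 j = 0 \/ a 0 j = 1.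

Lemma ex_neq m (a b : 'rV[F]_m) : a != b -> exists j, a 0 j != b 0 j.
Proof.
move=> hab; case: (pickP (fun j => a 0 j != b 0 j)) => [j hj | h]; first by exists j.
case/eqP: hab; apply/rowP => j; by move/negbFE/eqP: (h j).
Qed.

Lemma ex_one m (a : 'rV[F]_m) : a != 0 -> in01 a -> exists j, a 0 j = 1.
Proof.
move=> /ex_neq[j hj] h01; exists j; move: hj; rewrite mxE.
by case: (h01 j) => ->; rewrite ?eqxx.
Qed.

Lemma trip_aux (l mu nu : F) m (A B D : 'I_m -> F) :
  (forall j, l * A j + mu * B j = nu * D j) ->
  (forall j, A j = 0 \/ A j = 1) -> (forall j, D j = 0 \/ D j = 1) ->
  l != 0 -> mu != 0 -> forall j3 jb, A j3 = 1 -> B j3 = 0 -> B jb = 1 -> l = mu.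
Proof.
move=> hE hA hD hl hmu j3 jb a3 b3 bb.
have e3 := hE j3; rewrite a3 b3 mulr1 mulr0 addr0 in e3.
have hlnu : l = nu.
  by case: (hD j3) e3 => -> ; rewrite ?mulr0 ?mulr1 // => h; rewrite h eqxx in hl.
have eb := hE jb; rewrite bb mulr1 -hlnu in eb.
case: (hA jb) eb => ->; case: (hD jb) => ->; rewrite ?mulr0 ?mulr1 ?add0r //.
- by move=> h; rewrite h eqxx in hmu.
- move=> /eqP; rewrite addr_eq0 (oppF hchar) => /eqP //.
- move=> h; have hm0 : mu = 0 by rewrite -(addKr l mu) h addNr.
  by rewrite hm0 eqxx in hmu.
Qed.

Lemma triple m (f : 'M[F]_(m, 6)) (hf : row_free f) (a b d : 'rV[F]_m) (l mu nu : F) :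
  a != 0 -> b != 0 -> in01 a -> in01 b -> in01 d -> a != b ->
  l != 0 -> mu != 0 ->
  l *: (a *m f) + mu *: (b *m f) = nu *: (d *m f) -> l = mu.
Proof.
move=> ha hb h1a h1b h1d hab hl hmu; rewrite !scalemxAl -mulmxDl => /(row_free_inj hf) E.
have hE j : l * a 0 j + mu * b 0 j = nu * d 0 j.
  by have := congr1 (fun M : 'rV[F]_m => M 0 j) E; rewrite !mxE.
have [j3 hj3] := ex_neq hab.
have [ja hja] := ex_one ha h1a; have [jb hjb] := ex_one hb h1b.
case: (h1a j3) hj3 => a3; case: (h1b j3) => b3; rewrite a3 b3 ?eqxx // => _.
- by symmetry; apply: (trip_aux (A := fun j => b 0 j) (B := fun j => a 0 j) (D := fun j => d 0 j) _ h1b h1d hmu hl b3 a3 hja) => j; rewrite addrC.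
- exact: (trip_aux (A := fun j => a 0 j) (B := fun j => b 0 j) (D := fun j => d 0 j) hE h1a h1d hl hmu a3 b3 hjb).
Qed.

Definition inG m (f : 'M[F]_(m, 6)) (v : 'rV[F]_6) :=
  exists a : 'rV[F]_m, [/\ a != 0, in01 a & <<v>>%MS = <<a *m f>>%MS].

Lemma inG_repr m (f : 'M[F]_(m, 6)) (hf : row_free f) v : v != 0 -> inG f v ->
  exists a, exists2 l, [/\ a != 0, in01 a & l != 0] & v = l *: (a *m f).
Proof.
move=> hv [a [ha h01 he]].
have haf : a *m f != 0.
  apply: contraNneq ha => h; apply/eqP/(row_free_inj hf); by rewrite h mul0mx.
have [l hl ->] := (gen_eq v haf).1 he.
by exists a, l.
Qed.

Lemma step m (f : 'M[F]_(m, 6)) (hf : row_free f) X Y a b l mu :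
  a != 0 -> in01 a -> l != 0 -> X = l *: (a *m f) ->
  b != 0 -> in01 b -> mu != 0 -> Y = mu *: (b *m f) ->
  <<X>>%MS != <<Y>>%MS -> X + Y != 0 -> inG f (X + Y) -> l = mu.
Proof.
move=> ha h1a hl hX hb h1b hmu hY hXY hs hG.
have [d [nu [hd h1d hnu] hs']] := inG_repr hf hs hG.
have eqn : l *: (a *m f) + mu *: (b *m f) = nu *: (d *m f) by rewrite -hX -hY.
apply: (triple hf ha hb h1a h1b h1d _ hl hmu eqn).
apply: contraNneq hXY => ab; rewrite hX hY ab.
by rewrite (eq_genmx (eqmx_scale _ hl)) (eq_genmx (eqmx_scale _ hmu)).
Qed.

Lemma chain m (f : 'M[F]_(m, 6)) (hf : row_free f) (X0 Y1 X2 Y0 : 'rV[F]_6) :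
  X0 != 0 -> Y1 != 0 -> X2 != 0 -> Y0 != 0 ->
  X0 + Y1 != 0 -> Y1 + X2 != 0 -> X2 + Y0 != 0 -> X0 + Y0 != 0 ->
  <<X0>>%MS != <<Y1>>%MS -> <<Y1>>%MS != <<X2>>%MS -> <<X2>>%MS != <<Y0>>%MS ->
  inG f X0 -> inG f Y1 -> inG f X2 -> inG f Y0 ->
  inG f (X0 + Y1) -> inG f (Y1 + X2) -> inG f (X2 + Y0) -> inG f (X0 + Y0).
Proof.
move=> n1 n2 n3 n4 n5 n6 n7 n8 d1 d2 d3 g1 g2 g3 g4 g5 g6 g7.
have [a1 [l1 [a1n a1o l1n] e1]] := inG_repr hf n1 g1.
have [a2 [l2 [a2n a2o l2n] e2]] := inG_repr hf n2 g2.
have [a3 [l3 [a3n a3o l3n] e3]] := inG_repr hf n3 g3.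
have [a4 [l4 [a4n a4o l4n] e4]] := inG_repr hf n4 g4.
have E12 := step hf a1n a1o l1n e1 a2n a2o l2n e2 d1 n5 g5.
have E23 := step hf a2n a2o l2n e2 a3n a3o l3n e3 d2 n6 g6.
have E34 := step hf a3n a3o l3n e3 a4n a4o l4n e4 d3 n7 g7.
have hsum : X0 + Y0 = l1 *: ((a1 + a4) *m f).
  by rewrite e1 e4 -E34 -E23 -E12 mulmxDl scalerDr.
exists (a1 + a4); split.
- apply: contraNneq n8 => h; by rewrite hsum h mul0mx scaler0.
- move=> j; rewrite mxE; case: (a1o j) => ->; case: (a4o j) => ->;
    rewrite ?add0r ?addr0 ?addxx //; by [left|right].
- by rewrite hsum (eq_genmx (eqmx_scale _ l1n)).
Qed.

Lemma F2pts_inG m (f : 'M[F]_(m, 6)) p v : p \in F2pts f -> val p = <<v>>%MS -> inG f v.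
Proof.
rewrite inE => /existsP[a /and3P[ha /forallP h01 /eqP hp]] hv.
exists a; split => //; last by rewrite -hv.
by move=> j; case/orP: (h01 j) => /eqP ->; [left|right].
Qed.

Lemma in_span (S : {set ppoint F}) (n0 : ppoint F) (X0 Y1 X2 Y0 : 'rV[F]_6) :
  X0 != 0 -> Y1 != 0 -> X2 != 0 -> Y0 != 0 ->
  X0 + Y1 != 0 -> Y1 + X2 != 0 -> X2 + Y0 != 0 -> X0 + Y0 != 0 ->
  <<X0>>%MS != <<Y1>>%MS -> <<Y1>>%MS != <<X2>>%MS -> <<X2>>%MS != <<Y0>>%MS ->
  (forall v, v \in [:: X0; Y1; X2; Y0; X0 + Y1; Y1 + X2; X2 + Y0] ->
     exists2 p, p \in S & val p = <<v>>%MS) ->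
  val n0 = <<X0 + Y0>>%MS -> in_F2_span n0 S.
Proof.
move=> n1 n2 n3 n4 n5 n6 n7 n8 d1 d2 d3 hS hn G [m [f [hf ->]]] sub.
have g v : v \in [:: X0; Y1; X2; Y0; X0 + Y1; Y1 + X2; X2 + Y0] -> inG f v.
  by move/hS => [p pS pv]; apply: (F2pts_inG (subsetP sub p pS) pv).
have g1 : inG f X0 by apply: g; rewrite !inE eqxx.
have g2 : inG f Y1 by apply: g; rewrite !inE eqxx ?orbT.
have g3 : inG f X2 by apply: g; rewrite !inE eqxx ?orbT.
have g4 : inG f Y0 by apply: g; rewrite !inE eqxx ?orbT.
have g5 : inG f (X0 + Y1) by apply: g; rewrite !inE eqxx ?orbT.
have g6 : inG f (Y1 + X2) by apply: g; rewrite !inE eqxx ?orbT.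
have g7 : inG f (X2 + Y0) by apply: g; rewrite !inE eqxx ?orbT.
have [a [ha h01 he]] := chain hf n1 n2 n3 n4 n5 n6 n7 n8 d1 d2 d3 g1 g2 g3 g4 g5 g6 g7.
rewrite inE; apply/existsP; exists a; rewrite ha hn he eqxx andbT /=.
by apply/forallP => j; case: (h01 j) => ->; rewrite eqxx ?orbT.
Qed.

End Span.

Lemma F2cases (x : 'F_2) : x = 0 \/ x = 1.
Proof. by case: x => [[|[|//]] h]; [left|right]; apply/val_inj. Qed.

Lemma mul11g (R : fieldType) (a : 'M[R]_1) n (u : 'rV[R]_n) : a *m u = a 0 0 *: u.
Proof. by rewrite {1}[a]mx11_scalar mul_scalar_mx. Qed.

Lemma F2sub_eq m (a b : 'rV['F_2]_m) : a != 0 -> (a <= b)%MS -> a = b.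
Proof.
move=> ha /sub_rVP[mu hmu]; move: ha; rewrite hmu.
by case: (F2cases mu) => ->; rewrite ?scale0r ?eqxx // scale1r.
Qed.

Lemma pchar2F2 : 2%N \in [pchar 'F_2].
Proof. exact: pchar_Fp. Qed.

Section Main.
Variable F : finFieldType.
Hypothesis hchar : 2%N \in [pchar F].

Definition iota (x : 'F_2) : F := (x : nat)%:R.
Lemma iota_morph : nmod_morphism iota.
Proof.
split; first by rewrite /iota.
case=> [[|[|//]] hx]; case=> [[|[|//]] hy]; rewrite /iota /=; try (by rewrite ?add0r ?addr0).
by rewrite -[1 + 1]/(2%:R) two0.
Qed.
Lemma iota_mul : monoid_morphism iota.
Proof.
split; first by [].
case=> [[|[|//]] hx]; case=> [[|[|//]] hy]; rewrite /iota /= ?mul0r ?mulr0 ?mulr1 //.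
Qed.
HB.instance Definition _ := GRing.isNmodMorphism.Build _ _ iota iota_morph.
HB.instance Definition _ := GRing.isMonoidMorphism.Build _ _ iota iota_mul.

Definition lv m (a : 'rV['F_2]_m) : 'rV[F]_m := map_mx iota a.

Lemma iota01 x : iota x = 0 \/ iota x = 1.
Proof. by case: (F2cases x) => ->; [left; exact: rmorph0 | right; exact: rmorph1]. Qed.

Lemma lv_eq0 m (a : 'rV['F_2]_m) : (lv a == 0) = (a == 0).
Proof. exact: map_mx_eq0. Qed.
Lemma lvD m (a b : 'rV['F_2]_m) : lv (a + b) = lv a + lv b.
Proof. exact: map_mxD. Qed.

Lemma c2simp (A X Y : F) : X + Y + A + X + Y = A.
Proof.
have -> : X + Y + A + X + Y = A + (X + X) + (Y + Y) by ring.
by rewrite !addxx // !addr0.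
Qed.

Variable C : 'M[F]_6.

Section Gen.
Variables (m : nat) (e : 'M[F]_(m, 6)) (qm : 'rV['F_2]_m -> 'F_2) (c : F).
Hypotheses (he : row_free e) (hc : c != 0).
Hypothesis hq : forall a, qf C (lv a *m e) = c * iota (qm a).

Lemma bfq a b : bf C (lv a *m e) (lv b *m e) = c * iota (qm (a + b) + qm a + qm b).
Proof. by rewrite !rmorphD /= !mulrDr -!hq lvD mulmxDl qfD c2simp. Qed.



Lemma lv_ne0 a : a != 0 -> lv a *m e != 0.
Proof.
move=> ha; apply: contraNneq ha => h; rewrite -lv_eq0; apply/eqP.
by apply: (row_free_inj he); rewrite h mul0mx.
Qed.

Lemma pt_inj a b : a != 0 -> <<lv a *m e>>%MS = <<lv b *m e>>%MS -> a = b.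
Proof.
move=> ha /genmxP/andP[h _]; apply: F2sub_eq => //.
by move: h; rewrite submxMfree // map_submx.
Qed.

Lemma span3 a b d : d != 0 -> (lv d *m e <= lv a *m e + lv b *m e)%MS ->
  [\/ d = a, d = b | d = a + b].
Proof.
move=> hd; rewrite addsmxE -mul_col_mx submxMfree // -map_col_mx map_submx -addsmxE.
case/sub_addsmxP => [[p q] /= hpq]; move: hd; rewrite hpq !mul11g.
case: (F2cases (p 0 0)) => ->; case: (F2cases (q 0 0)) => ->;
  rewrite ?scale0r ?scale1r ?addr0 ?add0r ?eqxx //; by constructor.
Qed.

Lemma rank2 a b : a != 0 -> b != 0 -> a != b -> \rank (lv a *m e + lv b *m e)%MS = 2%N.
Proof.
move=> ha hb hab.
rewrite addsmxE -mul_col_mx mxrankMfree // -map_col_mx mxrank_map.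
apply/eqP; rewrite eqn_leq; apply/andP; split; first exact: rank_leq_row.
have sa : (a <= col_mx a b)%MS by rewrite -addsmxE addsmxSl.
have ra : \rank a = 1%N by rewrite rank_rV ha.
rewrite ltnNge; apply/negP => r1.
have : (col_mx a b <= a)%MS.
  rewrite -(mxrank_leqif_sup sa).2 eq_sym; apply/eqP/anti_leq.
  by rewrite (mxrankS sa) andbT; apply: leq_trans r1 _; rewrite ra.
rewrite -addsmxE addsmx_sub => /andP[_ sb].
by move: hab; rewrite (F2sub_eq hb sb) eqxx.
Qed.

Definition Sset : {set ppoint F} := [set p : ppoint F | [exists a : 'rV['F_2]_m,
  [&& a != 0, qm a == 0 & val p == <<lv a *m e>>%MS]]].
Definition coord (p : ppoint F) : 'rV['F_2]_m :=
  odflt 0 [pick a | [&& a != 0, qm a == 0 & val p == <<lv a *m e>>%MS]].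

Lemma coordP p : p \in Sset ->
  [/\ coord p != 0, qm (coord p) = 0 & val p = <<lv (coord p) *m e>>%MS].
Proof.
rewrite inE => /existsP[a ha]; rewrite /coord; case: pickP => [b /and3P[h1 /eqP h2 /eqP h3]|/(_ a)].
  by [].
by rewrite ha.
Qed.

Lemma inS p a : a != 0 -> qm a = 0 -> val p = <<lv a *m e>>%MS -> p \in Sset.
Proof. by move=> ha hqa hp; rewrite inE; apply/existsP; exists a; rewrite ha hqa hp !eqxx. Qed.

Lemma coord_eq p a : a != 0 -> val p = <<lv a *m e>>%MS -> p \in Sset -> coord p = a.
Proof.
move=> ha hp /coordP[h1 _ h3]; apply: pt_inj => //; by rewrite -h3.
Qed.

Lemma mkS_in a (ha : a != 0) : qm a = 0 -> mkpt (lv_ne0 ha) \in Sset.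
Proof. by move=> h; apply: (@inS (mkpt (lv_ne0 ha)) a ha h (erefl _)). Qed.
Lemma mkS_coord a (ha : a != 0) : qm a = 0 -> coord (mkpt (lv_ne0 ha)) = a.
Proof. by move=> h; apply: (@coord_eq (mkpt (lv_ne0 ha)) a ha (erefl _)); apply: mkS_in. Qed.

Lemma S_sub : Sset \subset [set p | qpoint C p].
Proof.
apply/subsetP => p /coordP[_ h2 h3]; rewrite inE /qpoint h3 totsing_gen hq h2.
by rewrite rmorph0 mulr0.
Qed.

Lemma S_F2pts : Sset \subset F2pts e.
Proof.
apply/subsetP => p /coordP[h1 _ h3]; rewrite inE; apply/existsP; exists (lv (coord p)).
rewrite lv_eq0 h1 h3 eqxx andbT /=; apply/forallP => j; rewrite mxE.
by case: (iota01 (coord p 0 j)) => ->; rewrite eqxx ?orbT.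
Qed.

Lemma S_F2 : F2_subgeometry Sset.
Proof. by exists (F2pts e); split; [exists m, e | exact: S_F2pts]. Qed.


Lemma coord_inj p q : p \in Sset -> q \in Sset -> coord p = coord q -> p = q.
Proof.
move=> hp hq' hpq; apply: val_inj.
by have [_ _ ->] := coordP hp; have [_ _ ->] := coordP hq'; rewrite hpq.
Qed.

Lemma qv0 a : qm a = 0 -> qf C (lv a *m e) = 0.
Proof. by move=> h; rewrite hq h rmorph0 mulr0. Qed.

Lemma bfq0 a b : qm a = 0 -> qm b = 0 ->
  (bf C (lv a *m e) (lv b *m e) == 0) = (qm (a + b) == 0).
Proof.
move=> ha hb; rewrite bfq ha hb !addr0 mulf_eq0 (negPf hc) /=.
by rewrite fmorph_eq0.
Qed.

Lemma F2neq (a b : 'rV['F_2]_m) : a != b -> a + b != 0.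
Proof.
apply: contraNneq => /eqP; rewrite addr_eq0 (oppv pchar2F2) => /eqP ->.
by [].
Qed.

Lemma S_iso : iso_to_model C Sset qm.
Proof.
exists coord; split.
- by move=> p q hp hq'; apply: coord_inj.
- apply/setP => v; rewrite inE; apply/imsetP/andP => [[p hp ->]|[hv /eqP hqv]].
    by have [h1 h2 _] := coordP hp; rewrite h1 h2.
  by exists (mkpt (lv_ne0 hv)); [apply: mkS_in | rewrite mkS_coord].
move=> T hT; split.
- case=> L [/andP[hL /eqP rL] [hTe h2]].
  have [p [q [hpT hqT hpq]]] := card_gt1P h2.
  move: (hpT); rewrite hTe inE => /andP[pS pL].
  move: (hqT); rewrite hTe inE => /andP[qS qL].
  have [ha qa ea] := coordP pS; have [hb qb eb] := coordP qS.
  set a := coord p in ha qa ea *; set b := coord q in hb qb eb *.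
  have hab : a != b by apply: contraNneq hpq => h; apply/eqP/coord_inj.
  have La : (lv a *m e <= L)%MS by rewrite -gen_sub -ea.
  have Lb : (lv b *m e <= L)%MS by rewrite -gen_sub -eb.
  have qab : qm (a + b) = 0.
    apply/eqP; rewrite -bfq0 //.
    have := forallP hL (lv a *m e + lv b *m e); rewrite addmx_sub //= qfD !qv0 //.
    by rewrite !add0r.
  have sL : (lv a *m e + lv b *m e <= L)%MS by rewrite addsmx_sub La Lb.
  have Ls : (L <= lv a *m e + lv b *m e)%MS.
    by rewrite -(mxrank_leqif_sup sL).2 rank2 // rL.
  exists a, b; do 6!split => //.
  apply/setP => v; rewrite !inE; apply/imsetP/idP => [[r hr ->]|].
    move: hr; rewrite ?hTe inE => /andP[rS rLL].
    have [hd _ ed] := coordP rS.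
    have : (lv (coord r) *m e <= lv a *m e + lv b *m e)%MS.
      by apply: submx_trans Ls; rewrite -gen_sub -ed.
    by case/(span3 hd) => ->; rewrite eqxx ?orbT.
  rewrite -orbA => /or3P[] /eqP ->; [by exists p => //; rewrite inE pS pL | by exists q => //; rewrite inE qS qL|].
  have hab0 := F2neq hab.
  exists (mkpt (lv_ne0 hab0)); last by rewrite mkS_coord.
  rewrite ?hTe inE; apply/andP; split; first by apply: mkS_in.
  by rewrite /= gen_sub lvD mulmxDl addmx_sub.
- case=> [u [v [hu [hv [huv [qu [qv [quv hT']]]]]]]].
  have getp w : w \in [set u; v; u + v] -> exists2 p, p \in T & coord p = w.
    by rewrite -hT' => /imsetP[p hp ->]; exists p.
  have /getp[pu pT pc] : u \in [set u; v; u + v] by rewrite !inE eqxx.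
  have /getp[pv vT vc] : v \in [set u; v; u + v] by rewrite !inE eqxx orbT.
  pose L := (lv u *m e + lv v *m e)%MS.
  have inL w : w \in [set u; v; u + v] -> (lv w *m e <= L)%MS.
    rewrite !inE -orbA => /or3P[] /eqP ->; rewrite ?addsmxSl ?addsmxSr //.
    by rewrite lvD mulmxDl addmx_sub_adds.
  exists L; split; [apply/andP; split|split].
  + apply/forallP => w; apply/implyP => /sub_addsmxP[[p q] /= ->].
    rewrite !mul11g qfD !qfZ bfZl bfZr !qv0 //.
    move/eqP: quv; rewrite -bfq0 // => /eqP ->.
    by rewrite !mulr0 !addr0.
  + by rewrite rank2.
  + apply/setP => p; rewrite inE; apply/idP/andP => [hp|[pS pL]].
      have pS := subsetP hT p hp.
      have [_ _ ep] := coordP pS.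
      have : coord p \in [set u; v; u + v] by rewrite -hT'; apply: imset_f.
      by move/inL; rewrite -gen_sub -ep => ->.
    have [hd _ ed] := coordP pS.
    have : coord p \in [set u; v; u + v].
      have sp : (lv (coord p) *m e <= L)%MS by rewrite -gen_sub -ed.
      by rewrite !inE; case/(span3 hd): sp => ->; rewrite eqxx ?orbT.
    case/getp => q qT qc.
    by rewrite -(coord_inj (subsetP hT q qT) pS qc).
  + apply/card_gt1P; exists pu, pv; split => //.
    by apply: contraNneq huv => h; rewrite -pc -vc h.
Qed.

End Gen.

Definition Mx m (E : seq 'rV[F]_6) : 'M[F]_(m,6) := \matrix_(i < m, j < 6) (nth 0 E i) 0 j.
Lemma rowMx m E (i : 'I_m) : row i (Mx m E) = nth 0 E i.
Proof. by apply/rowP => j; rewrite !mxE. Qed.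
Lemma mulMx m E (a : 'rV[F]_m) : a *m Mx m E = \sum_(i < m) a ord0 i *: nth 0 E i.
Proof.
rewrite mulmx_sum_row; apply: eq_bigr => i _; rewrite rowMx.
by have -> : (0 : 'I_1) = ord0 by apply/val_inj.
Qed.
Lemma sum3 (V : zmodType) (G : 'I_3 -> V) :
  \sum_i G i = G (inord 0) + G (inord 1) + G (inord 2).
Proof.
rewrite !big_ord_recr big_ord0 /= GRing.add0r.
by congr (_ + _ + _); congr G; apply/val_inj; rewrite /= inordK.
Qed.
Lemma all3 (P : 'I_3 -> Prop) : P (inord 0) -> P (inord 1) -> P (inord 2) -> forall j, P j.
Proof.
move=> h0 h1 h2 j; rewrite -(inord_val j).
by case: j => [[|[|[|//]]] ?].
Qed.
Lemma sum4 (V : zmodType) (G : 'I_4 -> V) :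
  \sum_i G i = G (inord 0) + G (inord 1) + G (inord 2) + G (inord 3).
Proof.
rewrite !big_ord_recr big_ord0 /= GRing.add0r.
by congr (_ + _ + _ + _); congr G; apply/val_inj; rewrite /= inordK.
Qed.
Lemma all4 (P : 'I_4 -> Prop) : P (inord 0) -> P (inord 1) -> P (inord 2) -> P (inord 3) -> forall j, P j.
Proof.
move=> h0 h1 h2 h3 j; rewrite -(inord_val j).
by case: j => [[|[|[|[|//]]]] ?].
Qed.
Lemma sum5 (V : zmodType) (G : 'I_5 -> V) :
  \sum_i G i = G (inord 0) + G (inord 1) + G (inord 2) + G (inord 3) + G (inord 4).
Proof.
rewrite !big_ord_recr big_ord0 /= GRing.add0r.
by congr (_ + _ + _ + _ + _); congr G; apply/val_inj; rewrite /= inordK.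
Qed.
Lemma all5 (P : 'I_5 -> Prop) : P (inord 0) -> P (inord 1) -> P (inord 2) -> P (inord 3) -> P (inord 4) -> forall j, P j.
Proof.
move=> h0 h1 h2 h3 h4 j; rewrite -(inord_val j).
by case: j => [[|[|[|[|[|//]]]]] ?].
Qed.
Lemma sum6 (V : zmodType) (G : 'I_6 -> V) :
  \sum_i G i = G (inord 0) + G (inord 1) + G (inord 2) + G (inord 3) + G (inord 4) + G (inord 5).
Proof.
rewrite !big_ord_recr big_ord0 /= GRing.add0r.
by congr (_ + _ + _ + _ + _ + _); congr G; apply/val_inj; rewrite /= inordK.
Qed.
Lemma all6 (P : 'I_6 -> Prop) : P (inord 0) -> P (inord 1) -> P (inord 2) -> P (inord 3) -> P (inord 4) -> P (inord 5) -> forall j, P j.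
Proof.
move=> h0 h1 h2 h3 h4 h5 j; rewrite -(inord_val j).
by case: j => [[|[|[|[|[|[|//]]]]]] ?].
Qed.
Lemma c2eq (x y z : F) : x = y + 2%:R * z -> x = y.
Proof. by rewrite two0 // mul0r addr0. Qed.
Lemma c2vec (x y z : 'rV[F]_6) : x = y + (z + z) -> x = y.
Proof. by rewrite addvv // addr0. Qed.

Definition rowl m (s : seq 'F_2) : 'rV['F_2]_m := \row_j nth 0 s j.
Lemma rowl_ne0 m s j : (j < m)%N -> nth 0 s j != 0 -> rowl m s != 0.
Proof.
move=> hj hs; apply/negP => /eqP /rowP /(_ (Ordinal hj)); rewrite !mxE /= => h.
by rewrite h eqxx in hs.
Qed.
Lemma rowl_eta4 (a : 'rV['F_2]_4) : a = rowl 4 [:: a ord0 (inord 0); a ord0 (inord 1); a ord0 (inord 2); a ord0 (inord 3)].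
Proof.
apply/rowP => j; rewrite mxE.
have -> : (0 : 'I_1) = ord0 by apply/val_inj.
by move: j; apply: all4; rewrite inordK.
Qed.
Lemma rowl_eta5 (a : 'rV['F_2]_5) : a = rowl 5 [:: a ord0 (inord 0); a ord0 (inord 1); a ord0 (inord 2); a ord0 (inord 3); a ord0 (inord 4)].
Proof.
apply/rowP => j; rewrite mxE.
have -> : (0 : 'I_1) = ord0 by apply/val_inj.
by move: j; apply: all5; rewrite inordK.
Qed.
Lemma rowl_eta6 (a : 'rV['F_2]_6) : a = rowl 6 [:: a ord0 (inord 0); a ord0 (inord 1); a ord0 (inord 2); a ord0 (inord 3); a ord0 (inord 4); a ord0 (inord 5)].
Proof.
apply/rowP => j; rewrite mxE.
have -> : (0 : 'I_1) = ord0 by apply/val_inj.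
by move: j; apply: all6; rewrite inordK.
Qed.
Variables (H0 : 'M[F]_6) (n0 : ppoint F).
Hypothesis hH0 : \rank H0 = 5%N.
Hypothesis hn0 : (val n0 == perpmx C H0)%MS.

Lemma case3 (x : 'I_3 -> 'I_2 -> ppoint F) : centric C H0 n0 x -> of_form C H0 n0 x qplus3.
Proof.
move=> hcen.
have [c [n [u [[hc nz hn perp] [[qu qn bun buu] pts]]]]] := front hchar hH0 hn0 ord0 hcen.
case: (hcen) => hinj hpt _ _.
set u0 := u (inord 0).
set u1 := u (inord 1).
set u2 := u (inord 2).
have d01 : (inord 0 : 'I_3) != inord 1 by rewrite -val_eqE /= !inordK.
have d02 : (inord 0 : 'I_3) != inord 2 by rewrite -val_eqE /= !inordK.
have d12 : (inord 1 : 'I_3) != inord 2 by rewrite -val_eqE /= !inordK.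
have q0 : qf C u0 = 0 := qu _.
have b00 : bf C u0 u0 = 0 by rewrite bfxx.
have b0n : bf C u0 n = c := bun _.
have bn0 : bf C n u0 = c by rewrite bf_sym.
have b0_1 : bf C u0 u1 = c := buu _ _ d01.
have b1_0 : bf C u1 u0 = c by rewrite bf_sym.
have b0_2 : bf C u0 u2 = c := buu _ _ d02.
have b2_0 : bf C u2 u0 = c by rewrite bf_sym.
have q1 : qf C u1 = 0 := qu _.
have b11 : bf C u1 u1 = 0 by rewrite bfxx.
have b1n : bf C u1 n = c := bun _.
have bn1 : bf C n u1 = c by rewrite bf_sym.
have b1_2 : bf C u1 u2 = c := buu _ _ d12.
have b2_1 : bf C u2 u1 = c by rewrite bf_sym.
have q2 : qf C u2 = 0 := qu _.
have b22 : bf C u2 u2 = 0 by rewrite bfxx.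
have b2n : bf C u2 n = c := bun _.
have bn2 : bf C n u2 = c by rewrite bf_sym.
have bnn : bf C n n = 2%:R * c by rewrite bfxx // two0 // mul0r.
pose E := [:: (u0); (u1); (n + u2); (n + u0 + u1)].
pose e := Mx 4 E.
have qfe : forall a : 'rV[F]_4, qf C (a *m e) = c * (a ord0 (inord 0) * a ord0 (inord 1) + a ord0 (inord 2) * a ord0 (inord 3)).
  move=> a; rewrite /e /E mulMx sum4 !inordK //=. set s0 := a ord0 (inord 0). set s1 := a ord0 (inord 1). set s2 := a ord0 (inord 2). set s3 := a ord0 (inord 3).
  rewrite !(qfD, bfDl, bfDr, qfZ, bfZl, bfZr) !(q0, b00, b0n, bn0, b0_1, b1_0, b0_2, b2_0, q1, b11, b1n, bn1, b1_2, b2_1, q2, b22, b2n, bn2, bnn, qn).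
  by apply: (c2eq (z := c * ((s0 * s2) + (s0 * s3) + (s1 * s2) + (s1 * s3) + (s2 * s2) + (3%:R * s2 * s3) + (2%:R * s3 * s3)))); ring.
have bfn : forall a : 'rV[F]_4, bf C (a *m e) n = c * (a ord0 (inord 0) + a ord0 (inord 1) + a ord0 (inord 2)).
  move=> a; rewrite /e /E mulMx sum4 !inordK //=. set s0 := a ord0 (inord 0). set s1 := a ord0 (inord 1). set s2 := a ord0 (inord 2). set s3 := a ord0 (inord 3).
  rewrite !(qfD, bfDl, bfDr, qfZ, bfZl, bfZr) !(q0, b00, b0n, bn0, b0_1, b1_0, b0_2, b2_0, q1, b11, b1n, bn1, b1_2, b2_1, q2, b22, b2n, bn2, bnn, qn).
  by apply: (c2eq (z := c * ((s2) + (2%:R * s3)))); ring.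
have bfk0 : forall a : 'rV[F]_4, bf C (a *m e) (u0) = c * a ord0 (inord 1).
  move=> a; rewrite /e /E mulMx sum4 !inordK //=. set s0 := a ord0 (inord 0). set s1 := a ord0 (inord 1). set s2 := a ord0 (inord 2). set s3 := a ord0 (inord 3).
  rewrite !(qfD, bfDl, bfDr, qfZ, bfZl, bfZr) !(q0, b00, b0n, bn0, b0_1, b1_0, b0_2, b2_0, q1, b11, b1n, bn1, b1_2, b2_1, q2, b22, b2n, bn2, bnn, qn).
  by apply: (c2eq (z := c * ((s2) + (s3)))); ring.
have bfk1 : forall a : 'rV[F]_4, bf C (a *m e) (u1) = c * a ord0 (inord 0).
  move=> a; rewrite /e /E mulMx sum4 !inordK //=. set s0 := a ord0 (inord 0). set s1 := a ord0 (inord 1). set s2 := a ord0 (inord 2). set s3 := a ord0 (inord 3).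
  rewrite !(qfD, bfDl, bfDr, qfZ, bfZl, bfZr) !(q0, b00, b0n, bn0, b0_1, b1_0, b0_2, b2_0, q1, b11, b1n, bn1, b1_2, b2_1, q2, b22, b2n, bn2, bnn, qn).
  by apply: (c2eq (z := c * ((s2) + (s3)))); ring.
have bfk2 : forall a : 'rV[F]_4, bf C (a *m e) (n + u2) = c * a ord0 (inord 3).
  move=> a; rewrite /e /E mulMx sum4 !inordK //=. set s0 := a ord0 (inord 0). set s1 := a ord0 (inord 1). set s2 := a ord0 (inord 2). set s3 := a ord0 (inord 3).
  rewrite !(qfD, bfDl, bfDr, qfZ, bfZl, bfZr) !(q0, b00, b0n, bn0, b0_1, b1_0, b0_2, b2_0, q1, b11, b1n, bn1, b1_2, b2_1, q2, b22, b2n, bn2, bnn, qn).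
  by apply: (c2eq (z := c * ((s0) + (s1) + (2%:R * s2) + (3%:R * s3)))); ring.
have bfk3 : forall a : 'rV[F]_4, bf C (a *m e) (n + u0 + u1) = c * a ord0 (inord 2).
  move=> a; rewrite /e /E mulMx sum4 !inordK //=. set s0 := a ord0 (inord 0). set s1 := a ord0 (inord 1). set s2 := a ord0 (inord 2). set s3 := a ord0 (inord 3).
  rewrite !(qfD, bfDl, bfDr, qfZ, bfZl, bfZr) !(q0, b00, b0n, bn0, b0_1, b1_0, b0_2, b2_0, q1, b11, b1n, bn1, b1_2, b2_1, q2, b22, b2n, bn2, bnn, qn).
  by apply: (c2eq (z := c * ((s0) + (s1) + (3%:R * s2) + (4%:R * s3)))); ring.
have inj : forall a : 'rV[F]_4, a *m e = 0 -> a = 0.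
  move=> a h0.
  have a1 : a ord0 (inord 1) = 0.
    by have := bfk0 a; rewrite h0 bf0l => /esym/eqP; rewrite mulf_eq0 (negPf hc) /= => /eqP.
  have a0 : a ord0 (inord 0) = 0.
    by have := bfk1 a; rewrite h0 bf0l => /esym/eqP; rewrite mulf_eq0 (negPf hc) /= => /eqP.
  have a3 : a ord0 (inord 3) = 0.
    by have := bfk2 a; rewrite h0 bf0l => /esym/eqP; rewrite mulf_eq0 (negPf hc) /= => /eqP.
  have a2 : a ord0 (inord 2) = 0.
    by have := bfk3 a; rewrite h0 bf0l => /esym/eqP; rewrite mulf_eq0 (negPf hc) /= => /eqP.
  apply/rowP => j; rewrite mxE.
  have -> : (0 : 'I_1) = ord0 by apply/val_inj.
  by move: j; apply: all4.
have he : row_free e.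
  rewrite -kermx_eq0; apply/eqP/row_matrixP => i; rewrite row0; apply: inj.
  by apply/sub_kermxP; exact: row_sub.
have hq : forall a, qf C (lv a *m e) = c * iota (qplus3 a).
  by move=> a; rewrite qfe !mxE /qplus3 ?rmorphD ?rmorphM ?rmorphXn.
have v0a : lv (rowl 4 [:: 1; 0; 0; 0]) *m e = u0.
  rewrite /e /E mulMx sum4 !mxE !inordK //= ?rmorph0 ?rmorph1 ?scale0r ?scale1r ?addr0 ?add0r //.
  try (apply: (c2vec (z := 0)); apply/rowP => j; rewrite !mxE; ring).
have pv0a : <<lv (rowl 4 [:: 1; 0; 0; 0]) *m e>>%MS = val (x (inord 0) ord0) by rewrite v0a (pts _).1.
have nv0a : rowl 4 [:: 1; 0; 0; 0] != 0 by apply: (@rowl_ne0 _ _ 0) => //; vm_compute.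
have zv0a : qplus3 (rowl 4 [:: 1; 0; 0; 0]) = 0 by rewrite /qplus3 /rowl !mxE !inordK //=; apply/eqP; vm_compute.
have sv0a : x (inord 0) ord0 \in Sset e qplus3 by apply: (inS nv0a zv0a); rewrite pv0a.
have v0b : lv (rowl 4 [:: 0; 1; 0; 1]) *m e = n + u0.
  rewrite /e /E mulMx sum4 !mxE !inordK //= ?rmorph0 ?rmorph1 ?scale0r ?scale1r ?addr0 ?add0r //.
  try (apply: (c2vec (z := u1)); apply/rowP => j; rewrite !mxE; ring).
have pv0b : <<lv (rowl 4 [:: 0; 1; 0; 1]) *m e>>%MS = val (x (inord 0) ord_max) by rewrite v0b (pts _).2.
have nv0b : rowl 4 [:: 0; 1; 0; 1] != 0 by apply: (@rowl_ne0 _ _ 1) => //; vm_compute.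
have zv0b : qplus3 (rowl 4 [:: 0; 1; 0; 1]) = 0 by rewrite /qplus3 /rowl !mxE !inordK //=; apply/eqP; vm_compute.
have sv0b : x (inord 0) ord_max \in Sset e qplus3 by apply: (inS nv0b zv0b); rewrite pv0b.
have v1a : lv (rowl 4 [:: 0; 1; 0; 0]) *m e = u1.
  rewrite /e /E mulMx sum4 !mxE !inordK //= ?rmorph0 ?rmorph1 ?scale0r ?scale1r ?addr0 ?add0r //.
  try (apply: (c2vec (z := 0)); apply/rowP => j; rewrite !mxE; ring).
have pv1a : <<lv (rowl 4 [:: 0; 1; 0; 0]) *m e>>%MS = val (x (inord 1) ord0) by rewrite v1a (pts _).1.
have nv1a : rowl 4 [:: 0; 1; 0; 0] != 0 by apply: (@rowl_ne0 _ _ 1) => //; vm_compute.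
have zv1a : qplus3 (rowl 4 [:: 0; 1; 0; 0]) = 0 by rewrite /qplus3 /rowl !mxE !inordK //=; apply/eqP; vm_compute.
have sv1a : x (inord 1) ord0 \in Sset e qplus3 by apply: (inS nv1a zv1a); rewrite pv1a.
have v1b : lv (rowl 4 [:: 1; 0; 0; 1]) *m e = n + u1.
  rewrite /e /E mulMx sum4 !mxE !inordK //= ?rmorph0 ?rmorph1 ?scale0r ?scale1r ?addr0 ?add0r //.
  try (apply: (c2vec (z := u0)); apply/rowP => j; rewrite !mxE; ring).
have pv1b : <<lv (rowl 4 [:: 1; 0; 0; 1]) *m e>>%MS = val (x (inord 1) ord_max) by rewrite v1b (pts _).2.
have nv1b : rowl 4 [:: 1; 0; 0; 1] != 0 by apply: (@rowl_ne0 _ _ 0) => //; vm_compute.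
have zv1b : qplus3 (rowl 4 [:: 1; 0; 0; 1]) = 0 by rewrite /qplus3 /rowl !mxE !inordK //=; apply/eqP; vm_compute.
have sv1b : x (inord 1) ord_max \in Sset e qplus3 by apply: (inS nv1b zv1b); rewrite pv1b.
have v2a : lv (rowl 4 [:: 1; 1; 1; 1]) *m e = u2.
  rewrite /e /E mulMx sum4 !mxE !inordK //= ?rmorph0 ?rmorph1 ?scale0r ?scale1r ?addr0 ?add0r //.
  try (apply: (c2vec (z := u1 + n + u0)); apply/rowP => j; rewrite !mxE; ring).
have pv2a : <<lv (rowl 4 [:: 1; 1; 1; 1]) *m e>>%MS = val (x (inord 2) ord0) by rewrite v2a (pts _).1.
have nv2a : rowl 4 [:: 1; 1; 1; 1] != 0 by apply: (@rowl_ne0 _ _ 0) => //; vm_compute.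
have zv2a : qplus3 (rowl 4 [:: 1; 1; 1; 1]) = 0 by rewrite /qplus3 /rowl !mxE !inordK //=; apply/eqP; vm_compute.
have sv2a : x (inord 2) ord0 \in Sset e qplus3 by apply: (inS nv2a zv2a); rewrite pv2a.
have v2b : lv (rowl 4 [:: 0; 0; 1; 0]) *m e = n + u2.
  rewrite /e /E mulMx sum4 !mxE !inordK //= ?rmorph0 ?rmorph1 ?scale0r ?scale1r ?addr0 ?add0r //.
  try (apply: (c2vec (z := 0)); apply/rowP => j; rewrite !mxE; ring).
have pv2b : <<lv (rowl 4 [:: 0; 0; 1; 0]) *m e>>%MS = val (x (inord 2) ord_max) by rewrite v2b (pts _).2.
have nv2b : rowl 4 [:: 0; 0; 1; 0] != 0 by apply: (@rowl_ne0 _ _ 2) => //; vm_compute.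
have zv2b : qplus3 (rowl 4 [:: 0; 0; 1; 0]) = 0 by rewrite /qplus3 /rowl !mxE !inordK //=; apply/eqP; vm_compute.
have sv2b : x (inord 2) ord_max \in Sset e qplus3 by apply: (inS nv2b zv2b); rewrite pv2b.
have s01 : lv (rowl 4 [:: 0; 0; 0; 1]) *m e = u0 + (n + u1).
  rewrite /e /E mulMx sum4 !mxE !inordK //= ?rmorph0 ?rmorph1 ?scale0r ?scale1r ?addr0 ?add0r //.
  try (apply: (c2vec (z := 0)); apply/rowP => j; rewrite !mxE; ring).
have ns01 : rowl 4 [:: 0; 0; 0; 1] != 0 by apply: (@rowl_ne0 _ _ 3) => //; vm_compute.
have zs01 : qplus3 (rowl 4 [:: 0; 0; 0; 1]) = 0 by rewrite /qplus3 /rowl !mxE !inordK //=; apply/eqP; vm_compute.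
have s12 : lv (rowl 4 [:: 0; 1; 1; 0]) *m e = n + u1 + u2.
  rewrite /e /E mulMx sum4 !mxE !inordK //= ?rmorph0 ?rmorph1 ?scale0r ?scale1r ?addr0 ?add0r //.
  try (apply: (c2vec (z := 0)); apply/rowP => j; rewrite !mxE; ring).
have ns12 : rowl 4 [:: 0; 1; 1; 0] != 0 by apply: (@rowl_ne0 _ _ 1) => //; vm_compute.
have zs12 : qplus3 (rowl 4 [:: 0; 1; 1; 0]) = 0 by rewrite /qplus3 /rowl !mxE !inordK //=; apply/eqP; vm_compute.
have s20 : lv (rowl 4 [:: 1; 0; 1; 0]) *m e = u2 + (n + u0).
  rewrite /e /E mulMx sum4 !mxE !inordK //= ?rmorph0 ?rmorph1 ?scale0r ?scale1r ?addr0 ?add0r //.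
  try (apply: (c2vec (z := 0)); apply/rowP => j; rewrite !mxE; ring).
have ns20 : rowl 4 [:: 1; 0; 1; 0] != 0 by apply: (@rowl_ne0 _ _ 0) => //; vm_compute.
have zs20 : qplus3 (rowl 4 [:: 1; 0; 1; 0]) = 0 by rewrite /qplus3 /rowl !mxE !inordK //=; apply/eqP; vm_compute.
exists (Sset e qplus3); split.
- exact: (S_sub hq).
- exact: S_F2 he.
- exact: S_iso he hc hq.
- apply: (@in_span _ hchar _ _ u0 (n + u1) u2 (n + u0)).
  + by rewrite -v0a; apply: (lv_ne0 he); exact: nv0a.
  + by rewrite -v1b; apply: (lv_ne0 he); exact: nv1b.
  + by rewrite -v2a; apply: (lv_ne0 he); exact: nv2a.
  + by rewrite -v0b; apply: (lv_ne0 he); exact: nv0b.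
  + by rewrite -s01; apply: (lv_ne0 he); exact: ns01.
  + by rewrite -s12; apply: (lv_ne0 he); exact: ns12.
  + by rewrite -s20; apply: (lv_ne0 he); exact: ns20.
  + have -> : u0 + (n + u0) = n by apply: (c2vec (z := u0)); apply/rowP => j; rewrite !mxE; ring.
    exact: nz.
  + rewrite -(pts _).1 -(pts _).2; apply/negP => /eqP/val_inj/hinj[h _]; by rewrite h eqxx in d01.
  + rewrite -(pts _).2 -(pts _).1; apply/negP => /eqP/val_inj/hinj[h _]; by rewrite h eqxx in d12.
  + rewrite -(pts _).1 -(pts _).2; apply/negP => /eqP/val_inj/hinj[h _]; by rewrite h eqxx in d02.
  + move=> v; rewrite !inE.
    case/orP => [/eqP ->|]; first by exists (x (inord 0) ord0) => //; rewrite (pts _).1.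
    case/orP => [/eqP ->|]; first by exists (x (inord 1) ord_max) => //; rewrite (pts _).2.
    case/orP => [/eqP ->|]; first by exists (x (inord 2) ord0) => //; rewrite (pts _).1.
    case/orP => [/eqP ->|]; first by exists (x (inord 0) ord_max) => //; rewrite (pts _).2.
    case/orP => [/eqP ->|]; first by exists (mkpt (lv_ne0 he ns01)); [apply: mkS_in | rewrite /= s01].
    case/orP => [/eqP ->|]; first by exists (mkpt (lv_ne0 he ns12)); [apply: mkS_in | rewrite /= s12].
    move/eqP ->; by exists (mkpt (lv_ne0 he ns20)); [apply: mkS_in | rewrite /= s20].
  + rewrite hn; congr (<<_>>%MS); symmetry; apply: (c2vec (z := u0)); apply/rowP => j; rewrite !mxE; ring.
- apply/setP => p; rewrite inE; apply/imset2P/andP => [[i b _ _ ->]|[pS pH]].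
    split; last exact: (hpt i b).2.
    have [->|->] : b = ord0 \/ b = ord_max by case: b => [[|[|//]] hb]; [left|right]; apply/val_inj.
      by move: i; apply: all3; [exact: sv0a | exact: sv1a | exact: sv2a].
    by move: i; apply: all3; [exact: sv0b | exact: sv1b | exact: sv2b].
  have [ha qa ea] := coordP pS.
  set a := coord e qplus3 p in ha qa ea.
  have hl : a ord0 (inord 0) + a ord0 (inord 1) + a ord0 (inord 2) != 0.
    rewrite -(fmorph_eq0 iota) !rmorphD /=.
    by move: pH; rewrite ea gen_sub perp bfn !mxE mulf_eq0 (negPf hc).
  move/eqP: qa; rewrite {1}(rowl_eta4 a) in ea; move: ea hl; rewrite /qplus3.
  case: (F2cases (a ord0 (inord 0))) => ->; case: (F2cases (a ord0 (inord 1))) => ->; case: (F2cases (a ord0 (inord 2))) => ->; case: (F2cases (a ord0 (inord 3))) => ->.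
  all: move=> ea; rewrite /= => hl hq0; try by [].
  all: rewrite ?(pv0a, pv0b, pv1a, pv1b, pv2a, pv2b) in ea.
  all: by move/val_inj: ea => ->; apply/imset2P; apply: imset2_f.
Qed.
Lemma case4 (x : 'I_4 -> 'I_2 -> ppoint F) : centric C H0 n0 x -> of_form C H0 n0 x qpar4.
Proof.
move=> hcen.
have [c [n [u [[hc nz hn perp] [[qu qn bun buu] pts]]]]] := front hchar hH0 hn0 ord0 hcen.
case: (hcen) => hinj hpt _ _.
set u0 := u (inord 0).
set u1 := u (inord 1).
set u2 := u (inord 2).
set u3 := u (inord 3).
have d01 : (inord 0 : 'I_4) != inord 1 by rewrite -val_eqE /= !inordK.
have d02 : (inord 0 : 'I_4) != inord 2 by rewrite -val_eqE /= !inordK.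
have d03 : (inord 0 : 'I_4) != inord 3 by rewrite -val_eqE /= !inordK.
have d12 : (inord 1 : 'I_4) != inord 2 by rewrite -val_eqE /= !inordK.
have d13 : (inord 1 : 'I_4) != inord 3 by rewrite -val_eqE /= !inordK.
have d23 : (inord 2 : 'I_4) != inord 3 by rewrite -val_eqE /= !inordK.
have q0 : qf C u0 = 0 := qu _.
have b00 : bf C u0 u0 = 0 by rewrite bfxx.
have b0n : bf C u0 n = c := bun _.
have bn0 : bf C n u0 = c by rewrite bf_sym.
have b0_1 : bf C u0 u1 = c := buu _ _ d01.
have b1_0 : bf C u1 u0 = c by rewrite bf_sym.
have b0_2 : bf C u0 u2 = c := buu _ _ d02.
have b2_0 : bf C u2 u0 = c by rewrite bf_sym.
have b0_3 : bf C u0 u3 = c := buu _ _ d03.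
have b3_0 : bf C u3 u0 = c by rewrite bf_sym.
have q1 : qf C u1 = 0 := qu _.
have b11 : bf C u1 u1 = 0 by rewrite bfxx.
have b1n : bf C u1 n = c := bun _.
have bn1 : bf C n u1 = c by rewrite bf_sym.
have b1_2 : bf C u1 u2 = c := buu _ _ d12.
have b2_1 : bf C u2 u1 = c by rewrite bf_sym.
have b1_3 : bf C u1 u3 = c := buu _ _ d13.
have b3_1 : bf C u3 u1 = c by rewrite bf_sym.
have q2 : qf C u2 = 0 := qu _.
have b22 : bf C u2 u2 = 0 by rewrite bfxx.
have b2n : bf C u2 n = c := bun _.
have bn2 : bf C n u2 = c by rewrite bf_sym.
have b2_3 : bf C u2 u3 = c := buu _ _ d23.
have b3_2 : bf C u3 u2 = c by rewrite bf_sym.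
have q3 : qf C u3 = 0 := qu _.
have b33 : bf C u3 u3 = 0 by rewrite bfxx.
have b3n : bf C u3 n = c := bun _.
have bn3 : bf C n u3 = c by rewrite bf_sym.
have bnn : bf C n n = 2%:R * c by rewrite bfxx // two0 // mul0r.
pose E := [:: (u0); (u1); (n + u2); (n + u0 + u1); (n + u0 + u1 + u2 + u3)].
pose e := Mx 5 E.
have qfe : forall a : 'rV[F]_5, qf C (a *m e) = c * (a ord0 (inord 0) * a ord0 (inord 1) + a ord0 (inord 2) * a ord0 (inord 3) + a ord0 (inord 4) ^+ 2).
  move=> a; rewrite /e /E mulMx sum5 !inordK //=. set s0 := a ord0 (inord 0). set s1 := a ord0 (inord 1). set s2 := a ord0 (inord 2). set s3 := a ord0 (inord 3). set s4 := a ord0 (inord 4).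
  rewrite !(qfD, bfDl, bfDr, qfZ, bfZl, bfZr) !(q0, b00, b0n, bn0, b0_1, b1_0, b0_2, b2_0, b0_3, b3_0, q1, b11, b1n, bn1, b1_2, b2_1, b1_3, b3_1, q2, b22, b2n, bn2, b2_3, b3_2, q3, b33, b3n, bn3, bnn, qn).
  by apply: (c2eq (z := c * ((s0 * s2) + (s0 * s3) + (2%:R * s0 * s4) + (s1 * s2) + (s1 * s3) + (2%:R * s1 * s4) + (s2 * s2) + (3%:R * s2 * s3) + (5%:R * s2 * s4) + (2%:R * s3 * s3) + (7%:R * s3 * s4) + (5%:R * s4 * s4)))); ring.
have bfn : forall a : 'rV[F]_5, bf C (a *m e) n = c * (a ord0 (inord 0) + a ord0 (inord 1) + a ord0 (inord 2)).
  move=> a; rewrite /e /E mulMx sum5 !inordK //=. set s0 := a ord0 (inord 0). set s1 := a ord0 (inord 1). set s2 := a ord0 (inord 2). set s3 := a ord0 (inord 3). set s4 := a ord0 (inord 4).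
  rewrite !(qfD, bfDl, bfDr, qfZ, bfZl, bfZr) !(q0, b00, b0n, bn0, b0_1, b1_0, b0_2, b2_0, b0_3, b3_0, q1, b11, b1n, bn1, b1_2, b2_1, b1_3, b3_1, q2, b22, b2n, bn2, b2_3, b3_2, q3, b33, b3n, bn3, bnn, qn).
  by apply: (c2eq (z := c * ((s2) + (2%:R * s3) + (3%:R * s4)))); ring.
have bfk0 : forall a : 'rV[F]_5, bf C (a *m e) (u0) = c * a ord0 (inord 1).
  move=> a; rewrite /e /E mulMx sum5 !inordK //=. set s0 := a ord0 (inord 0). set s1 := a ord0 (inord 1). set s2 := a ord0 (inord 2). set s3 := a ord0 (inord 3). set s4 := a ord0 (inord 4).
  rewrite !(qfD, bfDl, bfDr, qfZ, bfZl, bfZr) !(q0, b00, b0n, bn0, b0_1, b1_0, b0_2, b2_0, b0_3, b3_0, q1, b11, b1n, bn1, b1_2, b2_1, b1_3, b3_1, q2, b22, b2n, bn2, b2_3, b3_2, q3, b33, b3n, bn3, bnn, qn).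
  by apply: (c2eq (z := c * ((s2) + (s3) + (2%:R * s4)))); ring.
have bfk1 : forall a : 'rV[F]_5, bf C (a *m e) (u1) = c * a ord0 (inord 0).
  move=> a; rewrite /e /E mulMx sum5 !inordK //=. set s0 := a ord0 (inord 0). set s1 := a ord0 (inord 1). set s2 := a ord0 (inord 2). set s3 := a ord0 (inord 3). set s4 := a ord0 (inord 4).
  rewrite !(qfD, bfDl, bfDr, qfZ, bfZl, bfZr) !(q0, b00, b0n, bn0, b0_1, b1_0, b0_2, b2_0, b0_3, b3_0, q1, b11, b1n, bn1, b1_2, b2_1, b1_3, b3_1, q2, b22, b2n, bn2, b2_3, b3_2, q3, b33, b3n, bn3, bnn, qn).
  by apply: (c2eq (z := c * ((s2) + (s3) + (2%:R * s4)))); ring.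
have bfk2 : forall a : 'rV[F]_5, bf C (a *m e) (n + u2) = c * a ord0 (inord 3).
  move=> a; rewrite /e /E mulMx sum5 !inordK //=. set s0 := a ord0 (inord 0). set s1 := a ord0 (inord 1). set s2 := a ord0 (inord 2). set s3 := a ord0 (inord 3). set s4 := a ord0 (inord 4).
  rewrite !(qfD, bfDl, bfDr, qfZ, bfZl, bfZr) !(q0, b00, b0n, bn0, b0_1, b1_0, b0_2, b2_0, b0_3, b3_0, q1, b11, b1n, bn1, b1_2, b2_1, b1_3, b3_1, q2, b22, b2n, bn2, b2_3, b3_2, q3, b33, b3n, bn3, bnn, qn).
  by apply: (c2eq (z := c * ((s0) + (s1) + (2%:R * s2) + (3%:R * s3) + (5%:R * s4)))); ring.
have bfk3 : forall a : 'rV[F]_5, bf C (a *m e) (n + u0 + u1) = c * a ord0 (inord 2).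
  move=> a; rewrite /e /E mulMx sum5 !inordK //=. set s0 := a ord0 (inord 0). set s1 := a ord0 (inord 1). set s2 := a ord0 (inord 2). set s3 := a ord0 (inord 3). set s4 := a ord0 (inord 4).
  rewrite !(qfD, bfDl, bfDr, qfZ, bfZl, bfZr) !(q0, b00, b0n, bn0, b0_1, b1_0, b0_2, b2_0, b0_3, b3_0, q1, b11, b1n, bn1, b1_2, b2_1, b1_3, b3_1, q2, b22, b2n, bn2, b2_3, b3_2, q3, b33, b3n, bn3, bnn, qn).
  by apply: (c2eq (z := c * ((s0) + (s1) + (3%:R * s2) + (4%:R * s3) + (7%:R * s4)))); ring.
have inj : forall a : 'rV[F]_5, a *m e = 0 -> a = 0.
  move=> a h0.
  have a1 : a ord0 (inord 1) = 0.
    by have := bfk0 a; rewrite h0 bf0l => /esym/eqP; rewrite mulf_eq0 (negPf hc) /= => /eqP.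
  have a0 : a ord0 (inord 0) = 0.
    by have := bfk1 a; rewrite h0 bf0l => /esym/eqP; rewrite mulf_eq0 (negPf hc) /= => /eqP.
  have a3 : a ord0 (inord 3) = 0.
    by have := bfk2 a; rewrite h0 bf0l => /esym/eqP; rewrite mulf_eq0 (negPf hc) /= => /eqP.
  have a2 : a ord0 (inord 2) = 0.
    by have := bfk3 a; rewrite h0 bf0l => /esym/eqP; rewrite mulf_eq0 (negPf hc) /= => /eqP.
  have a4 : a ord0 (inord 4) = 0.
    have := qfe a; rewrite h0 qf0 a0 a1 a2 a3 !mul0r !add0r => /esym/eqP.
    by rewrite mulf_eq0 (negPf hc) /= expf_eq0 /= => /eqP.
  apply/rowP => j; rewrite mxE.
  have -> : (0 : 'I_1) = ord0 by apply/val_inj.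
  by move: j; apply: all5.
have he : row_free e.
  rewrite -kermx_eq0; apply/eqP/row_matrixP => i; rewrite row0; apply: inj.
  by apply/sub_kermxP; exact: row_sub.
have hq : forall a, qf C (lv a *m e) = c * iota (qpar4 a).
  by move=> a; rewrite qfe !mxE /qpar4 ?rmorphD ?rmorphM ?rmorphXn.
have v0a : lv (rowl 5 [:: 1; 0; 0; 0; 0]) *m e = u0.
  rewrite /e /E mulMx sum5 !mxE !inordK //= ?rmorph0 ?rmorph1 ?scale0r ?scale1r ?addr0 ?add0r //.
  try (apply: (c2vec (z := 0)); apply/rowP => j; rewrite !mxE; ring).
have pv0a : <<lv (rowl 5 [:: 1; 0; 0; 0; 0]) *m e>>%MS = val (x (inord 0) ord0) by rewrite v0a (pts _).1.
have nv0a : rowl 5 [:: 1; 0; 0; 0; 0] != 0 by apply: (@rowl_ne0 _ _ 0) => //; vm_compute.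
have zv0a : qpar4 (rowl 5 [:: 1; 0; 0; 0; 0]) = 0 by rewrite /qpar4 /rowl !mxE !inordK //=; apply/eqP; vm_compute.
have sv0a : x (inord 0) ord0 \in Sset e qpar4 by apply: (inS nv0a zv0a); rewrite pv0a.
have v0b : lv (rowl 5 [:: 0; 1; 0; 1; 0]) *m e = n + u0.
  rewrite /e /E mulMx sum5 !mxE !inordK //= ?rmorph0 ?rmorph1 ?scale0r ?scale1r ?addr0 ?add0r //.
  try (apply: (c2vec (z := u1)); apply/rowP => j; rewrite !mxE; ring).
have pv0b : <<lv (rowl 5 [:: 0; 1; 0; 1; 0]) *m e>>%MS = val (x (inord 0) ord_max) by rewrite v0b (pts _).2.
have nv0b : rowl 5 [:: 0; 1; 0; 1; 0] != 0 by apply: (@rowl_ne0 _ _ 1) => //; vm_compute.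
have zv0b : qpar4 (rowl 5 [:: 0; 1; 0; 1; 0]) = 0 by rewrite /qpar4 /rowl !mxE !inordK //=; apply/eqP; vm_compute.
have sv0b : x (inord 0) ord_max \in Sset e qpar4 by apply: (inS nv0b zv0b); rewrite pv0b.
have v1a : lv (rowl 5 [:: 0; 1; 0; 0; 0]) *m e = u1.
  rewrite /e /E mulMx sum5 !mxE !inordK //= ?rmorph0 ?rmorph1 ?scale0r ?scale1r ?addr0 ?add0r //.
  try (apply: (c2vec (z := 0)); apply/rowP => j; rewrite !mxE; ring).
have pv1a : <<lv (rowl 5 [:: 0; 1; 0; 0; 0]) *m e>>%MS = val (x (inord 1) ord0) by rewrite v1a (pts _).1.
have nv1a : rowl 5 [:: 0; 1; 0; 0; 0] != 0 by apply: (@rowl_ne0 _ _ 1) => //; vm_compute.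
have zv1a : qpar4 (rowl 5 [:: 0; 1; 0; 0; 0]) = 0 by rewrite /qpar4 /rowl !mxE !inordK //=; apply/eqP; vm_compute.
have sv1a : x (inord 1) ord0 \in Sset e qpar4 by apply: (inS nv1a zv1a); rewrite pv1a.
have v1b : lv (rowl 5 [:: 1; 0; 0; 1; 0]) *m e = n + u1.
  rewrite /e /E mulMx sum5 !mxE !inordK //= ?rmorph0 ?rmorph1 ?scale0r ?scale1r ?addr0 ?add0r //.
  try (apply: (c2vec (z := u0)); apply/rowP => j; rewrite !mxE; ring).
have pv1b : <<lv (rowl 5 [:: 1; 0; 0; 1; 0]) *m e>>%MS = val (x (inord 1) ord_max) by rewrite v1b (pts _).2.
have nv1b : rowl 5 [:: 1; 0; 0; 1; 0] != 0 by apply: (@rowl_ne0 _ _ 0) => //; vm_compute.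
have zv1b : qpar4 (rowl 5 [:: 1; 0; 0; 1; 0]) = 0 by rewrite /qpar4 /rowl !mxE !inordK //=; apply/eqP; vm_compute.
have sv1b : x (inord 1) ord_max \in Sset e qpar4 by apply: (inS nv1b zv1b); rewrite pv1b.
have v2a : lv (rowl 5 [:: 1; 1; 1; 1; 0]) *m e = u2.
  rewrite /e /E mulMx sum5 !mxE !inordK //= ?rmorph0 ?rmorph1 ?scale0r ?scale1r ?addr0 ?add0r //.
  try (apply: (c2vec (z := u1 + n + u0)); apply/rowP => j; rewrite !mxE; ring).
have pv2a : <<lv (rowl 5 [:: 1; 1; 1; 1; 0]) *m e>>%MS = val (x (inord 2) ord0) by rewrite v2a (pts _).1.
have nv2a : rowl 5 [:: 1; 1; 1; 1; 0] != 0 by apply: (@rowl_ne0 _ _ 0) => //; vm_compute.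
have zv2a : qpar4 (rowl 5 [:: 1; 1; 1; 1; 0]) = 0 by rewrite /qpar4 /rowl !mxE !inordK //=; apply/eqP; vm_compute.
have sv2a : x (inord 2) ord0 \in Sset e qpar4 by apply: (inS nv2a zv2a); rewrite pv2a.
have v2b : lv (rowl 5 [:: 0; 0; 1; 0; 0]) *m e = n + u2.
  rewrite /e /E mulMx sum5 !mxE !inordK //= ?rmorph0 ?rmorph1 ?scale0r ?scale1r ?addr0 ?add0r //.
  try (apply: (c2vec (z := 0)); apply/rowP => j; rewrite !mxE; ring).
have pv2b : <<lv (rowl 5 [:: 0; 0; 1; 0; 0]) *m e>>%MS = val (x (inord 2) ord_max) by rewrite v2b (pts _).2.
have nv2b : rowl 5 [:: 0; 0; 1; 0; 0] != 0 by apply: (@rowl_ne0 _ _ 2) => //; vm_compute.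
have zv2b : qpar4 (rowl 5 [:: 0; 0; 1; 0; 0]) = 0 by rewrite /qpar4 /rowl !mxE !inordK //=; apply/eqP; vm_compute.
have sv2b : x (inord 2) ord_max \in Sset e qpar4 by apply: (inS nv2b zv2b); rewrite pv2b.
have v3a : lv (rowl 5 [:: 1; 1; 1; 0; 1]) *m e = u3.
  rewrite /e /E mulMx sum5 !mxE !inordK //= ?rmorph0 ?rmorph1 ?scale0r ?scale1r ?addr0 ?add0r //.
  try (apply: (c2vec (z := u1 + n + u0 + u2)); apply/rowP => j; rewrite !mxE; ring).
have pv3a : <<lv (rowl 5 [:: 1; 1; 1; 0; 1]) *m e>>%MS = val (x (inord 3) ord0) by rewrite v3a (pts _).1.
have nv3a : rowl 5 [:: 1; 1; 1; 0; 1] != 0 by apply: (@rowl_ne0 _ _ 0) => //; vm_compute.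
have zv3a : qpar4 (rowl 5 [:: 1; 1; 1; 0; 1]) = 0 by rewrite /qpar4 /rowl !mxE !inordK //=; apply/eqP; vm_compute.
have sv3a : x (inord 3) ord0 \in Sset e qpar4 by apply: (inS nv3a zv3a); rewrite pv3a.
have v3b : lv (rowl 5 [:: 0; 0; 1; 1; 1]) *m e = n + u3.
  rewrite /e /E mulMx sum5 !mxE !inordK //= ?rmorph0 ?rmorph1 ?scale0r ?scale1r ?addr0 ?add0r //.
  try (apply: (c2vec (z := u1 + n + u0 + u2)); apply/rowP => j; rewrite !mxE; ring).
have pv3b : <<lv (rowl 5 [:: 0; 0; 1; 1; 1]) *m e>>%MS = val (x (inord 3) ord_max) by rewrite v3b (pts _).2.
have nv3b : rowl 5 [:: 0; 0; 1; 1; 1] != 0 by apply: (@rowl_ne0 _ _ 2) => //; vm_compute.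
have zv3b : qpar4 (rowl 5 [:: 0; 0; 1; 1; 1]) = 0 by rewrite /qpar4 /rowl !mxE !inordK //=; apply/eqP; vm_compute.
have sv3b : x (inord 3) ord_max \in Sset e qpar4 by apply: (inS nv3b zv3b); rewrite pv3b.
have s01 : lv (rowl 5 [:: 0; 0; 0; 1; 0]) *m e = u0 + (n + u1).
  rewrite /e /E mulMx sum5 !mxE !inordK //= ?rmorph0 ?rmorph1 ?scale0r ?scale1r ?addr0 ?add0r //.
  try (apply: (c2vec (z := 0)); apply/rowP => j; rewrite !mxE; ring).
have ns01 : rowl 5 [:: 0; 0; 0; 1; 0] != 0 by apply: (@rowl_ne0 _ _ 3) => //; vm_compute.
have zs01 : qpar4 (rowl 5 [:: 0; 0; 0; 1; 0]) = 0 by rewrite /qpar4 /rowl !mxE !inordK //=; apply/eqP; vm_compute.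
have s12 : lv (rowl 5 [:: 0; 1; 1; 0; 0]) *m e = n + u1 + u2.
  rewrite /e /E mulMx sum5 !mxE !inordK //= ?rmorph0 ?rmorph1 ?scale0r ?scale1r ?addr0 ?add0r //.
  try (apply: (c2vec (z := 0)); apply/rowP => j; rewrite !mxE; ring).
have ns12 : rowl 5 [:: 0; 1; 1; 0; 0] != 0 by apply: (@rowl_ne0 _ _ 1) => //; vm_compute.
have zs12 : qpar4 (rowl 5 [:: 0; 1; 1; 0; 0]) = 0 by rewrite /qpar4 /rowl !mxE !inordK //=; apply/eqP; vm_compute.
have s20 : lv (rowl 5 [:: 1; 0; 1; 0; 0]) *m e = u2 + (n + u0).
  rewrite /e /E mulMx sum5 !mxE !inordK //= ?rmorph0 ?rmorph1 ?scale0r ?scale1r ?addr0 ?add0r //.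
  try (apply: (c2vec (z := 0)); apply/rowP => j; rewrite !mxE; ring).
have ns20 : rowl 5 [:: 1; 0; 1; 0; 0] != 0 by apply: (@rowl_ne0 _ _ 0) => //; vm_compute.
have zs20 : qpar4 (rowl 5 [:: 1; 0; 1; 0; 0]) = 0 by rewrite /qpar4 /rowl !mxE !inordK //=; apply/eqP; vm_compute.
exists (Sset e qpar4); split.
- exact: (S_sub hq).
- exact: S_F2 he.
- exact: S_iso he hc hq.
- apply: (@in_span _ hchar _ _ u0 (n + u1) u2 (n + u0)).
  + by rewrite -v0a; apply: (lv_ne0 he); exact: nv0a.
  + by rewrite -v1b; apply: (lv_ne0 he); exact: nv1b.
  + by rewrite -v2a; apply: (lv_ne0 he); exact: nv2a.
  + by rewrite -v0b; apply: (lv_ne0 he); exact: nv0b.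
  + by rewrite -s01; apply: (lv_ne0 he); exact: ns01.
  + by rewrite -s12; apply: (lv_ne0 he); exact: ns12.
  + by rewrite -s20; apply: (lv_ne0 he); exact: ns20.
  + have -> : u0 + (n + u0) = n by apply: (c2vec (z := u0)); apply/rowP => j; rewrite !mxE; ring.
    exact: nz.
  + rewrite -(pts _).1 -(pts _).2; apply/negP => /eqP/val_inj/hinj[h _]; by rewrite h eqxx in d01.
  + rewrite -(pts _).2 -(pts _).1; apply/negP => /eqP/val_inj/hinj[h _]; by rewrite h eqxx in d12.
  + rewrite -(pts _).1 -(pts _).2; apply/negP => /eqP/val_inj/hinj[h _]; by rewrite h eqxx in d02.
  + move=> v; rewrite !inE.
    case/orP => [/eqP ->|]; first by exists (x (inord 0) ord0) => //; rewrite (pts _).1.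
    case/orP => [/eqP ->|]; first by exists (x (inord 1) ord_max) => //; rewrite (pts _).2.
    case/orP => [/eqP ->|]; first by exists (x (inord 2) ord0) => //; rewrite (pts _).1.
    case/orP => [/eqP ->|]; first by exists (x (inord 0) ord_max) => //; rewrite (pts _).2.
    case/orP => [/eqP ->|]; first by exists (mkpt (lv_ne0 he ns01)); [apply: mkS_in | rewrite /= s01].
    case/orP => [/eqP ->|]; first by exists (mkpt (lv_ne0 he ns12)); [apply: mkS_in | rewrite /= s12].
    move/eqP ->; by exists (mkpt (lv_ne0 he ns20)); [apply: mkS_in | rewrite /= s20].
  + rewrite hn; congr (<<_>>%MS); symmetry; apply: (c2vec (z := u0)); apply/rowP => j; rewrite !mxE; ring.
- apply/setP => p; rewrite inE; apply/imset2P/andP => [[i b _ _ ->]|[pS pH]].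
    split; last exact: (hpt i b).2.
    have [->|->] : b = ord0 \/ b = ord_max by case: b => [[|[|//]] hb]; [left|right]; apply/val_inj.
      by move: i; apply: all4; [exact: sv0a | exact: sv1a | exact: sv2a | exact: sv3a].
    by move: i; apply: all4; [exact: sv0b | exact: sv1b | exact: sv2b | exact: sv3b].
  have [ha qa ea] := coordP pS.
  set a := coord e qpar4 p in ha qa ea.
  have hl : a ord0 (inord 0) + a ord0 (inord 1) + a ord0 (inord 2) != 0.
    rewrite -(fmorph_eq0 iota) !rmorphD /=.
    by move: pH; rewrite ea gen_sub perp bfn !mxE mulf_eq0 (negPf hc).
  move/eqP: qa; rewrite {1}(rowl_eta5 a) in ea; move: ea hl; rewrite /qpar4.
  case: (F2cases (a ord0 (inord 0))) => ->; case: (F2cases (a ord0 (inord 1))) => ->; case: (F2cases (a ord0 (inord 2))) => ->; case: (F2cases (a ord0 (inord 3))) => ->; case: (F2cases (a ord0 (inord 4))) => ->.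
  all: move=> ea; rewrite /= => hl hq0; try by [].
  all: rewrite ?(pv0a, pv0b, pv1a, pv1b, pv2a, pv2b, pv3a, pv3b) in ea.
  all: by move/val_inj: ea => ->; apply/imset2P; apply: imset2_f.
Qed.
Lemma case6 (hnd : qf_nondeg C) (x : 'I_6 -> 'I_2 -> ppoint F) : centric C H0 n0 x -> of_form C H0 n0 x qminus5.
Proof.
move=> hcen.
have [c [n [u [[hc nz hn perp] [[qu qn bun buu] pts]]]]] := front hchar hH0 hn0 ord0 hcen.
case: (hcen) => hinj hpt _ _.
set u0 := u (inord 0).
set u1 := u (inord 1).
set u2 := u (inord 2).
set u3 := u (inord 3).
set u4 := u (inord 4).
set u5 := u (inord 5).
have d01 : (inord 0 : 'I_6) != inord 1 by rewrite -val_eqE /= !inordK.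
have d02 : (inord 0 : 'I_6) != inord 2 by rewrite -val_eqE /= !inordK.
have d03 : (inord 0 : 'I_6) != inord 3 by rewrite -val_eqE /= !inordK.
have d04 : (inord 0 : 'I_6) != inord 4 by rewrite -val_eqE /= !inordK.
have d05 : (inord 0 : 'I_6) != inord 5 by rewrite -val_eqE /= !inordK.
have d12 : (inord 1 : 'I_6) != inord 2 by rewrite -val_eqE /= !inordK.
have d13 : (inord 1 : 'I_6) != inord 3 by rewrite -val_eqE /= !inordK.
have d14 : (inord 1 : 'I_6) != inord 4 by rewrite -val_eqE /= !inordK.
have d15 : (inord 1 : 'I_6) != inord 5 by rewrite -val_eqE /= !inordK.
have d23 : (inord 2 : 'I_6) != inord 3 by rewrite -val_eqE /= !inordK.
have d24 : (inord 2 : 'I_6) != inord 4 by rewrite -val_eqE /= !inordK.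
have d25 : (inord 2 : 'I_6) != inord 5 by rewrite -val_eqE /= !inordK.
have d34 : (inord 3 : 'I_6) != inord 4 by rewrite -val_eqE /= !inordK.
have d35 : (inord 3 : 'I_6) != inord 5 by rewrite -val_eqE /= !inordK.
have d45 : (inord 4 : 'I_6) != inord 5 by rewrite -val_eqE /= !inordK.
have q0 : qf C u0 = 0 := qu _.
have b00 : bf C u0 u0 = 0 by rewrite bfxx.
have b0n : bf C u0 n = c := bun _.
have bn0 : bf C n u0 = c by rewrite bf_sym.
have b0_1 : bf C u0 u1 = c := buu _ _ d01.
have b1_0 : bf C u1 u0 = c by rewrite bf_sym.
have b0_2 : bf C u0 u2 = c := buu _ _ d02.
have b2_0 : bf C u2 u0 = c by rewrite bf_sym.
have b0_3 : bf C u0 u3 = c := buu _ _ d03.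
have b3_0 : bf C u3 u0 = c by rewrite bf_sym.
have b0_4 : bf C u0 u4 = c := buu _ _ d04.
have b4_0 : bf C u4 u0 = c by rewrite bf_sym.
have b0_5 : bf C u0 u5 = c := buu _ _ d05.
have b5_0 : bf C u5 u0 = c by rewrite bf_sym.
have q1 : qf C u1 = 0 := qu _.
have b11 : bf C u1 u1 = 0 by rewrite bfxx.
have b1n : bf C u1 n = c := bun _.
have bn1 : bf C n u1 = c by rewrite bf_sym.
have b1_2 : bf C u1 u2 = c := buu _ _ d12.
have b2_1 : bf C u2 u1 = c by rewrite bf_sym.
have b1_3 : bf C u1 u3 = c := buu _ _ d13.
have b3_1 : bf C u3 u1 = c by rewrite bf_sym.
have b1_4 : bf C u1 u4 = c := buu _ _ d14.
have b4_1 : bf C u4 u1 = c by rewrite bf_sym.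
have b1_5 : bf C u1 u5 = c := buu _ _ d15.
have b5_1 : bf C u5 u1 = c by rewrite bf_sym.
have q2 : qf C u2 = 0 := qu _.
have b22 : bf C u2 u2 = 0 by rewrite bfxx.
have b2n : bf C u2 n = c := bun _.
have bn2 : bf C n u2 = c by rewrite bf_sym.
have b2_3 : bf C u2 u3 = c := buu _ _ d23.
have b3_2 : bf C u3 u2 = c by rewrite bf_sym.
have b2_4 : bf C u2 u4 = c := buu _ _ d24.
have b4_2 : bf C u4 u2 = c by rewrite bf_sym.
have b2_5 : bf C u2 u5 = c := buu _ _ d25.
have b5_2 : bf C u5 u2 = c by rewrite bf_sym.
have q3 : qf C u3 = 0 := qu _.
have b33 : bf C u3 u3 = 0 by rewrite bfxx.
have b3n : bf C u3 n = c := bun _.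
have bn3 : bf C n u3 = c by rewrite bf_sym.
have b3_4 : bf C u3 u4 = c := buu _ _ d34.
have b4_3 : bf C u4 u3 = c by rewrite bf_sym.
have b3_5 : bf C u3 u5 = c := buu _ _ d35.
have b5_3 : bf C u5 u3 = c by rewrite bf_sym.
have q4 : qf C u4 = 0 := qu _.
have b44 : bf C u4 u4 = 0 by rewrite bfxx.
have b4n : bf C u4 n = c := bun _.
have bn4 : bf C n u4 = c by rewrite bf_sym.
have b4_5 : bf C u4 u5 = c := buu _ _ d45.
have b5_4 : bf C u5 u4 = c by rewrite bf_sym.
have q5 : qf C u5 = 0 := qu _.
have b55 : bf C u5 u5 = 0 by rewrite bfxx.
have b5n : bf C u5 n = c := bun _.
have bn5 : bf C n u5 = c by rewrite bf_sym.
have bnn : bf C n n = 2%:R * c by rewrite bfxx // two0 // mul0r.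
pose E := [:: (u0); (u1); (n + u2); (n + u0 + u1); (n + u0 + u1 + u2 + u3); (n + u0 + u1 + u2 + u4)].
pose e := Mx 6 E.
have qfe : forall a : 'rV[F]_6, qf C (a *m e) = c * (a ord0 (inord 0) * a ord0 (inord 1) + a ord0 (inord 2) * a ord0 (inord 3) + a ord0 (inord 4) ^+ 2 + a ord0 (inord 4) * a ord0 (inord 5) + a ord0 (inord 5) ^+ 2).
  move=> a; rewrite /e /E mulMx sum6 !inordK //=. set s0 := a ord0 (inord 0). set s1 := a ord0 (inord 1). set s2 := a ord0 (inord 2). set s3 := a ord0 (inord 3). set s4 := a ord0 (inord 4). set s5 := a ord0 (inord 5).
  rewrite !(qfD, bfDl, bfDr, qfZ, bfZl, bfZr) !(q0, b00, b0n, bn0, b0_1, b1_0, b0_2, b2_0, b0_3, b3_0, b0_4, b4_0, b0_5, b5_0, q1, b11, b1n, bn1, b1_2, b2_1, b1_3, b3_1, b1_4, b4_1, b1_5, b5_1, q2, b22, b2n, bn2, b2_3, b3_2, b2_4, b4_2, b2_5, b5_2, q3, b33, b3n, bn3, b3_4, b4_3, b3_5, b5_3, q4, b44, b4n, bn4, b4_5, b5_4, q5, b55, b5n, bn5, bnn, qn).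
  by apply: (c2eq (z := c * ((s0 * s2) + (s0 * s3) + (2%:R * s0 * s4) + (2%:R * s0 * s5) + (s1 * s2) + (s1 * s3) + (2%:R * s1 * s4) + (2%:R * s1 * s5) + (s2 * s2) + (3%:R * s2 * s3) + (5%:R * s2 * s4) + (5%:R * s2 * s5) + (2%:R * s3 * s3) + (7%:R * s3 * s4) + (7%:R * s3 * s5) + (5%:R * s4 * s4) + (11%:R * s4 * s5) + (5%:R * s5 * s5)))); ring.
have bfn : forall a : 'rV[F]_6, bf C (a *m e) n = c * (a ord0 (inord 0) + a ord0 (inord 1) + a ord0 (inord 2)).
  move=> a; rewrite /e /E mulMx sum6 !inordK //=. set s0 := a ord0 (inord 0). set s1 := a ord0 (inord 1). set s2 := a ord0 (inord 2). set s3 := a ord0 (inord 3). set s4 := a ord0 (inord 4). set s5 := a ord0 (inord 5).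
  rewrite !(qfD, bfDl, bfDr, qfZ, bfZl, bfZr) !(q0, b00, b0n, bn0, b0_1, b1_0, b0_2, b2_0, b0_3, b3_0, b0_4, b4_0, b0_5, b5_0, q1, b11, b1n, bn1, b1_2, b2_1, b1_3, b3_1, b1_4, b4_1, b1_5, b5_1, q2, b22, b2n, bn2, b2_3, b3_2, b2_4, b4_2, b2_5, b5_2, q3, b33, b3n, bn3, b3_4, b4_3, b3_5, b5_3, q4, b44, b4n, bn4, b4_5, b5_4, q5, b55, b5n, bn5, bnn, qn).
  by apply: (c2eq (z := c * ((s2) + (2%:R * s3) + (3%:R * s4) + (3%:R * s5)))); ring.
have bfk0 : forall a : 'rV[F]_6, bf C (a *m e) (u0) = c * a ord0 (inord 1).
  move=> a; rewrite /e /E mulMx sum6 !inordK //=. set s0 := a ord0 (inord 0). set s1 := a ord0 (inord 1). set s2 := a ord0 (inord 2). set s3 := a ord0 (inord 3). set s4 := a ord0 (inord 4). set s5 := a ord0 (inord 5).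
  rewrite !(qfD, bfDl, bfDr, qfZ, bfZl, bfZr) !(q0, b00, b0n, bn0, b0_1, b1_0, b0_2, b2_0, b0_3, b3_0, b0_4, b4_0, b0_5, b5_0, q1, b11, b1n, bn1, b1_2, b2_1, b1_3, b3_1, b1_4, b4_1, b1_5, b5_1, q2, b22, b2n, bn2, b2_3, b3_2, b2_4, b4_2, b2_5, b5_2, q3, b33, b3n, bn3, b3_4, b4_3, b3_5, b5_3, q4, b44, b4n, bn4, b4_5, b5_4, q5, b55, b5n, bn5, bnn, qn).
  by apply: (c2eq (z := c * ((s2) + (s3) + (2%:R * s4) + (2%:R * s5)))); ring.
have bfk1 : forall a : 'rV[F]_6, bf C (a *m e) (u1) = c * a ord0 (inord 0).
  move=> a; rewrite /e /E mulMx sum6 !inordK //=. set s0 := a ord0 (inord 0). set s1 := a ord0 (inord 1). set s2 := a ord0 (inord 2). set s3 := a ord0 (inord 3). set s4 := a ord0 (inord 4). set s5 := a ord0 (inord 5).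
  rewrite !(qfD, bfDl, bfDr, qfZ, bfZl, bfZr) !(q0, b00, b0n, bn0, b0_1, b1_0, b0_2, b2_0, b0_3, b3_0, b0_4, b4_0, b0_5, b5_0, q1, b11, b1n, bn1, b1_2, b2_1, b1_3, b3_1, b1_4, b4_1, b1_5, b5_1, q2, b22, b2n, bn2, b2_3, b3_2, b2_4, b4_2, b2_5, b5_2, q3, b33, b3n, bn3, b3_4, b4_3, b3_5, b5_3, q4, b44, b4n, bn4, b4_5, b5_4, q5, b55, b5n, bn5, bnn, qn).
  by apply: (c2eq (z := c * ((s2) + (s3) + (2%:R * s4) + (2%:R * s5)))); ring.
have bfk2 : forall a : 'rV[F]_6, bf C (a *m e) (n + u2) = c * a ord0 (inord 3).
  move=> a; rewrite /e /E mulMx sum6 !inordK //=. set s0 := a ord0 (inord 0). set s1 := a ord0 (inord 1). set s2 := a ord0 (inord 2). set s3 := a ord0 (inord 3). set s4 := a ord0 (inord 4). set s5 := a ord0 (inord 5).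
  rewrite !(qfD, bfDl, bfDr, qfZ, bfZl, bfZr) !(q0, b00, b0n, bn0, b0_1, b1_0, b0_2, b2_0, b0_3, b3_0, b0_4, b4_0, b0_5, b5_0, q1, b11, b1n, bn1, b1_2, b2_1, b1_3, b3_1, b1_4, b4_1, b1_5, b5_1, q2, b22, b2n, bn2, b2_3, b3_2, b2_4, b4_2, b2_5, b5_2, q3, b33, b3n, bn3, b3_4, b4_3, b3_5, b5_3, q4, b44, b4n, bn4, b4_5, b5_4, q5, b55, b5n, bn5, bnn, qn).
  by apply: (c2eq (z := c * ((s0) + (s1) + (2%:R * s2) + (3%:R * s3) + (5%:R * s4) + (5%:R * s5)))); ring.
have bfk3 : forall a : 'rV[F]_6, bf C (a *m e) (n + u0 + u1) = c * a ord0 (inord 2).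
  move=> a; rewrite /e /E mulMx sum6 !inordK //=. set s0 := a ord0 (inord 0). set s1 := a ord0 (inord 1). set s2 := a ord0 (inord 2). set s3 := a ord0 (inord 3). set s4 := a ord0 (inord 4). set s5 := a ord0 (inord 5).
  rewrite !(qfD, bfDl, bfDr, qfZ, bfZl, bfZr) !(q0, b00, b0n, bn0, b0_1, b1_0, b0_2, b2_0, b0_3, b3_0, b0_4, b4_0, b0_5, b5_0, q1, b11, b1n, bn1, b1_2, b2_1, b1_3, b3_1, b1_4, b4_1, b1_5, b5_1, q2, b22, b2n, bn2, b2_3, b3_2, b2_4, b4_2, b2_5, b5_2, q3, b33, b3n, bn3, b3_4, b4_3, b3_5, b5_3, q4, b44, b4n, bn4, b4_5, b5_4, q5, b55, b5n, bn5, bnn, qn).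
  by apply: (c2eq (z := c * ((s0) + (s1) + (3%:R * s2) + (4%:R * s3) + (7%:R * s4) + (7%:R * s5)))); ring.
have bfk4 : forall a : 'rV[F]_6, bf C (a *m e) (n + u0 + u1 + u2 + u3) = c * a ord0 (inord 5).
  move=> a; rewrite /e /E mulMx sum6 !inordK //=. set s0 := a ord0 (inord 0). set s1 := a ord0 (inord 1). set s2 := a ord0 (inord 2). set s3 := a ord0 (inord 3). set s4 := a ord0 (inord 4). set s5 := a ord0 (inord 5).
  rewrite !(qfD, bfDl, bfDr, qfZ, bfZl, bfZr) !(q0, b00, b0n, bn0, b0_1, b1_0, b0_2, b2_0, b0_3, b3_0, b0_4, b4_0, b0_5, b5_0, q1, b11, b1n, bn1, b1_2, b2_1, b1_3, b3_1, b1_4, b4_1, b1_5, b5_1, q2, b22, b2n, bn2, b2_3, b3_2, b2_4, b4_2, b2_5, b5_2, q3, b33, b3n, bn3, b3_4, b4_3, b3_5, b5_3, q4, b44, b4n, bn4, b4_5, b5_4, q5, b55, b5n, bn5, bnn, qn).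
  by apply: (c2eq (z := c * ((2%:R * s0) + (2%:R * s1) + (5%:R * s2) + (7%:R * s3) + (11%:R * s4) + (11%:R * s5)))); ring.
have bfk5 : forall a : 'rV[F]_6, bf C (a *m e) (n + u0 + u1 + u2 + u4) = c * a ord0 (inord 4).
  move=> a; rewrite /e /E mulMx sum6 !inordK //=. set s0 := a ord0 (inord 0). set s1 := a ord0 (inord 1). set s2 := a ord0 (inord 2). set s3 := a ord0 (inord 3). set s4 := a ord0 (inord 4). set s5 := a ord0 (inord 5).
  rewrite !(qfD, bfDl, bfDr, qfZ, bfZl, bfZr) !(q0, b00, b0n, bn0, b0_1, b1_0, b0_2, b2_0, b0_3, b3_0, b0_4, b4_0, b0_5, b5_0, q1, b11, b1n, bn1, b1_2, b2_1, b1_3, b3_1, b1_4, b4_1, b1_5, b5_1, q2, b22, b2n, bn2, b2_3, b3_2, b2_4, b4_2, b2_5, b5_2, q3, b33, b3n, bn3, b3_4, b4_3, b3_5, b5_3, q4, b44, b4n, bn4, b4_5, b5_4, q5, b55, b5n, bn5, bnn, qn).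
  by apply: (c2eq (z := c * ((2%:R * s0) + (2%:R * s1) + (5%:R * s2) + (7%:R * s3) + (11%:R * s4) + (11%:R * s5)))); ring.
have inj : forall a : 'rV[F]_6, a *m e = 0 -> a = 0.
  move=> a h0.
  have a1 : a ord0 (inord 1) = 0.
    by have := bfk0 a; rewrite h0 bf0l => /esym/eqP; rewrite mulf_eq0 (negPf hc) /= => /eqP.
  have a0 : a ord0 (inord 0) = 0.
    by have := bfk1 a; rewrite h0 bf0l => /esym/eqP; rewrite mulf_eq0 (negPf hc) /= => /eqP.
  have a3 : a ord0 (inord 3) = 0.
    by have := bfk2 a; rewrite h0 bf0l => /esym/eqP; rewrite mulf_eq0 (negPf hc) /= => /eqP.
  have a2 : a ord0 (inord 2) = 0.
    by have := bfk3 a; rewrite h0 bf0l => /esym/eqP; rewrite mulf_eq0 (negPf hc) /= => /eqP.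
  have a5 : a ord0 (inord 5) = 0.
    by have := bfk4 a; rewrite h0 bf0l => /esym/eqP; rewrite mulf_eq0 (negPf hc) /= => /eqP.
  have a4 : a ord0 (inord 4) = 0.
    by have := bfk5 a; rewrite h0 bf0l => /esym/eqP; rewrite mulf_eq0 (negPf hc) /= => /eqP.
  apply/rowP => j; rewrite mxE.
  have -> : (0 : 'I_1) = ord0 by apply/val_inj.
  by move: j; apply: all6.
have he : row_free e.
  rewrite -kermx_eq0; apply/eqP/row_matrixP => i; rewrite row0; apply: inj.
  by apply/sub_kermxP; exact: row_sub.
have hq : forall a, qf C (lv a *m e) = c * iota (qminus5 a).
  by move=> a; rewrite qfe !mxE /qminus5 ?rmorphD ?rmorphM ?rmorphXn.
have rel : u5 = n + u0 + u1 + u2 + u3 + u4.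
  pose v := n + u0 + u1 + u2 + u3 + u4 + u5.
  have bv : forall a : 'rV[F]_6, bf C (a *m e) v = 0.
    move=> a; rewrite /e /E mulMx sum6 !inordK //=. set s0 := a ord0 (inord 0). set s1 := a ord0 (inord 1). set s2 := a ord0 (inord 2). set s3 := a ord0 (inord 3). set s4 := a ord0 (inord 4). set s5 := a ord0 (inord 5).
    rewrite /v !(qfD, bfDl, bfDr, qfZ, bfZl, bfZr) !(q0, b00, b0n, bn0, b0_1, b1_0, b0_2, b2_0, b0_3, b3_0, b0_4, b4_0, b0_5, b5_0, q1, b11, b1n, bn1, b1_2, b2_1, b1_3, b3_1, b1_4, b4_1, b1_5, b5_1, q2, b22, b2n, bn2, b2_3, b3_2, b2_4, b4_2, b2_5, b5_2, q3, b33, b3n, bn3, b3_4, b4_3, b3_5, b5_3, q4, b44, b4n, bn4, b4_5, b5_4, q5, b55, b5n, bn5, bnn, qn).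
    by apply: (c2eq (z := c * ((3%:R * s0) + (3%:R * s1) + (7%:R * s2) + (10%:R * s3) + (16%:R * s4) + (16%:R * s5)))); ring.
  have qv : qf C v = 0.
    rewrite /v !(qfD, bfDl, bfDr, qfZ, bfZl, bfZr) !(q0, b00, b0n, bn0, b0_1, b1_0, b0_2, b2_0, b0_3, b3_0, b0_4, b4_0, b0_5, b5_0, q1, b11, b1n, bn1, b1_2, b2_1, b1_3, b3_1, b1_4, b4_1, b1_5, b5_1, q2, b22, b2n, bn2, b2_3, b3_2, b2_4, b4_2, b2_5, b5_2, q3, b33, b3n, bn3, b3_4, b4_3, b3_5, b5_3, q4, b44, b4n, bn4, b4_5, b5_4, q5, b55, b5n, bn5, bnn, qn).
    by apply: (c2eq (z := c * ((11%:R * 1)))); ring.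
  have v0 : v = 0.
    apply: hnd => // y.
    have : (y <= e)%MS by apply: submx_full; exact: he.
    by case/submxP => D ->; rewrite bf_sym bv.
  apply: (c2vec (z := u5)); transitivity (u5 + v); first by rewrite v0 addr0.
  by rewrite /v; apply/rowP => j; rewrite !mxE; ring.
have v0a : lv (rowl 6 [:: 1; 0; 0; 0; 0; 0]) *m e = u0.
  rewrite /e /E mulMx sum6 !mxE !inordK //= ?rmorph0 ?rmorph1 ?scale0r ?scale1r ?addr0 ?add0r //.
  try (apply: (c2vec (z := 0)); apply/rowP => j; rewrite !mxE; ring).
have pv0a : <<lv (rowl 6 [:: 1; 0; 0; 0; 0; 0]) *m e>>%MS = val (x (inord 0) ord0) by rewrite v0a (pts _).1.
have nv0a : rowl 6 [:: 1; 0; 0; 0; 0; 0] != 0 by apply: (@rowl_ne0 _ _ 0) => //; vm_compute.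
have zv0a : qminus5 (rowl 6 [:: 1; 0; 0; 0; 0; 0]) = 0 by rewrite /qminus5 /rowl !mxE !inordK //=; apply/eqP; vm_compute.
have sv0a : x (inord 0) ord0 \in Sset e qminus5 by apply: (inS nv0a zv0a); rewrite pv0a.
have v0b : lv (rowl 6 [:: 0; 1; 0; 1; 0; 0]) *m e = n + u0.
  rewrite /e /E mulMx sum6 !mxE !inordK //= ?rmorph0 ?rmorph1 ?scale0r ?scale1r ?addr0 ?add0r //.
  try (apply: (c2vec (z := u1)); apply/rowP => j; rewrite !mxE; ring).
have pv0b : <<lv (rowl 6 [:: 0; 1; 0; 1; 0; 0]) *m e>>%MS = val (x (inord 0) ord_max) by rewrite v0b (pts _).2.
have nv0b : rowl 6 [:: 0; 1; 0; 1; 0; 0] != 0 by apply: (@rowl_ne0 _ _ 1) => //; vm_compute.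
have zv0b : qminus5 (rowl 6 [:: 0; 1; 0; 1; 0; 0]) = 0 by rewrite /qminus5 /rowl !mxE !inordK //=; apply/eqP; vm_compute.
have sv0b : x (inord 0) ord_max \in Sset e qminus5 by apply: (inS nv0b zv0b); rewrite pv0b.
have v1a : lv (rowl 6 [:: 0; 1; 0; 0; 0; 0]) *m e = u1.
  rewrite /e /E mulMx sum6 !mxE !inordK //= ?rmorph0 ?rmorph1 ?scale0r ?scale1r ?addr0 ?add0r //.
  try (apply: (c2vec (z := 0)); apply/rowP => j; rewrite !mxE; ring).
have pv1a : <<lv (rowl 6 [:: 0; 1; 0; 0; 0; 0]) *m e>>%MS = val (x (inord 1) ord0) by rewrite v1a (pts _).1.
have nv1a : rowl 6 [:: 0; 1; 0; 0; 0; 0] != 0 by apply: (@rowl_ne0 _ _ 1) => //; vm_compute.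
have zv1a : qminus5 (rowl 6 [:: 0; 1; 0; 0; 0; 0]) = 0 by rewrite /qminus5 /rowl !mxE !inordK //=; apply/eqP; vm_compute.
have sv1a : x (inord 1) ord0 \in Sset e qminus5 by apply: (inS nv1a zv1a); rewrite pv1a.
have v1b : lv (rowl 6 [:: 1; 0; 0; 1; 0; 0]) *m e = n + u1.
  rewrite /e /E mulMx sum6 !mxE !inordK //= ?rmorph0 ?rmorph1 ?scale0r ?scale1r ?addr0 ?add0r //.
  try (apply: (c2vec (z := u0)); apply/rowP => j; rewrite !mxE; ring).
have pv1b : <<lv (rowl 6 [:: 1; 0; 0; 1; 0; 0]) *m e>>%MS = val (x (inord 1) ord_max) by rewrite v1b (pts _).2.
have nv1b : rowl 6 [:: 1; 0; 0; 1; 0; 0] != 0 by apply: (@rowl_ne0 _ _ 0) => //; vm_compute.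
have zv1b : qminus5 (rowl 6 [:: 1; 0; 0; 1; 0; 0]) = 0 by rewrite /qminus5 /rowl !mxE !inordK //=; apply/eqP; vm_compute.
have sv1b : x (inord 1) ord_max \in Sset e qminus5 by apply: (inS nv1b zv1b); rewrite pv1b.
have v2a : lv (rowl 6 [:: 1; 1; 1; 1; 0; 0]) *m e = u2.
  rewrite /e /E mulMx sum6 !mxE !inordK //= ?rmorph0 ?rmorph1 ?scale0r ?scale1r ?addr0 ?add0r //.
  try (apply: (c2vec (z := u0 + n + u1)); apply/rowP => j; rewrite !mxE; ring).
have pv2a : <<lv (rowl 6 [:: 1; 1; 1; 1; 0; 0]) *m e>>%MS = val (x (inord 2) ord0) by rewrite v2a (pts _).1.
have nv2a : rowl 6 [:: 1; 1; 1; 1; 0; 0] != 0 by apply: (@rowl_ne0 _ _ 0) => //; vm_compute.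
have zv2a : qminus5 (rowl 6 [:: 1; 1; 1; 1; 0; 0]) = 0 by rewrite /qminus5 /rowl !mxE !inordK //=; apply/eqP; vm_compute.
have sv2a : x (inord 2) ord0 \in Sset e qminus5 by apply: (inS nv2a zv2a); rewrite pv2a.
have v2b : lv (rowl 6 [:: 0; 0; 1; 0; 0; 0]) *m e = n + u2.
  rewrite /e /E mulMx sum6 !mxE !inordK //= ?rmorph0 ?rmorph1 ?scale0r ?scale1r ?addr0 ?add0r //.
  try (apply: (c2vec (z := 0)); apply/rowP => j; rewrite !mxE; ring).
have pv2b : <<lv (rowl 6 [:: 0; 0; 1; 0; 0; 0]) *m e>>%MS = val (x (inord 2) ord_max) by rewrite v2b (pts _).2.
have nv2b : rowl 6 [:: 0; 0; 1; 0; 0; 0] != 0 by apply: (@rowl_ne0 _ _ 2) => //; vm_compute.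
have zv2b : qminus5 (rowl 6 [:: 0; 0; 1; 0; 0; 0]) = 0 by rewrite /qminus5 /rowl !mxE !inordK //=; apply/eqP; vm_compute.
have sv2b : x (inord 2) ord_max \in Sset e qminus5 by apply: (inS nv2b zv2b); rewrite pv2b.
have v3a : lv (rowl 6 [:: 1; 1; 1; 0; 1; 0]) *m e = u3.
  rewrite /e /E mulMx sum6 !mxE !inordK //= ?rmorph0 ?rmorph1 ?scale0r ?scale1r ?addr0 ?add0r //.
  try (apply: (c2vec (z := u0 + n + u1 + u2)); apply/rowP => j; rewrite !mxE; ring).
have pv3a : <<lv (rowl 6 [:: 1; 1; 1; 0; 1; 0]) *m e>>%MS = val (x (inord 3) ord0) by rewrite v3a (pts _).1.
have nv3a : rowl 6 [:: 1; 1; 1; 0; 1; 0] != 0 by apply: (@rowl_ne0 _ _ 0) => //; vm_compute.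
have zv3a : qminus5 (rowl 6 [:: 1; 1; 1; 0; 1; 0]) = 0 by rewrite /qminus5 /rowl !mxE !inordK //=; apply/eqP; vm_compute.
have sv3a : x (inord 3) ord0 \in Sset e qminus5 by apply: (inS nv3a zv3a); rewrite pv3a.
have v3b : lv (rowl 6 [:: 0; 0; 1; 1; 1; 0]) *m e = n + u3.
  rewrite /e /E mulMx sum6 !mxE !inordK //= ?rmorph0 ?rmorph1 ?scale0r ?scale1r ?addr0 ?add0r //.
  try (apply: (c2vec (z := u0 + n + u1 + u2)); apply/rowP => j; rewrite !mxE; ring).
have pv3b : <<lv (rowl 6 [:: 0; 0; 1; 1; 1; 0]) *m e>>%MS = val (x (inord 3) ord_max) by rewrite v3b (pts _).2.
have nv3b : rowl 6 [:: 0; 0; 1; 1; 1; 0] != 0 by apply: (@rowl_ne0 _ _ 2) => //; vm_compute.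
have zv3b : qminus5 (rowl 6 [:: 0; 0; 1; 1; 1; 0]) = 0 by rewrite /qminus5 /rowl !mxE !inordK //=; apply/eqP; vm_compute.
have sv3b : x (inord 3) ord_max \in Sset e qminus5 by apply: (inS nv3b zv3b); rewrite pv3b.
have v4a : lv (rowl 6 [:: 1; 1; 1; 0; 0; 1]) *m e = u4.
  rewrite /e /E mulMx sum6 !mxE !inordK //= ?rmorph0 ?rmorph1 ?scale0r ?scale1r ?addr0 ?add0r //.
  try (apply: (c2vec (z := u0 + n + u1 + u2)); apply/rowP => j; rewrite !mxE; ring).
have pv4a : <<lv (rowl 6 [:: 1; 1; 1; 0; 0; 1]) *m e>>%MS = val (x (inord 4) ord0) by rewrite v4a (pts _).1.
have nv4a : rowl 6 [:: 1; 1; 1; 0; 0; 1] != 0 by apply: (@rowl_ne0 _ _ 0) => //; vm_compute.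
have zv4a : qminus5 (rowl 6 [:: 1; 1; 1; 0; 0; 1]) = 0 by rewrite /qminus5 /rowl !mxE !inordK //=; apply/eqP; vm_compute.
have sv4a : x (inord 4) ord0 \in Sset e qminus5 by apply: (inS nv4a zv4a); rewrite pv4a.
have v4b : lv (rowl 6 [:: 0; 0; 1; 1; 0; 1]) *m e = n + u4.
  rewrite /e /E mulMx sum6 !mxE !inordK //= ?rmorph0 ?rmorph1 ?scale0r ?scale1r ?addr0 ?add0r //.
  try (apply: (c2vec (z := u0 + n + u1 + u2)); apply/rowP => j; rewrite !mxE; ring).
have pv4b : <<lv (rowl 6 [:: 0; 0; 1; 1; 0; 1]) *m e>>%MS = val (x (inord 4) ord_max) by rewrite v4b (pts _).2.
have nv4b : rowl 6 [:: 0; 0; 1; 1; 0; 1] != 0 by apply: (@rowl_ne0 _ _ 2) => //; vm_compute.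
have zv4b : qminus5 (rowl 6 [:: 0; 0; 1; 1; 0; 1]) = 0 by rewrite /qminus5 /rowl !mxE !inordK //=; apply/eqP; vm_compute.
have sv4b : x (inord 4) ord_max \in Sset e qminus5 by apply: (inS nv4b zv4b); rewrite pv4b.
have v5a : lv (rowl 6 [:: 1; 1; 1; 0; 1; 1]) *m e = u5.
  rewrite rel /e /E mulMx sum6 !mxE !inordK //= ?rmorph0 ?rmorph1 ?scale0r ?scale1r ?addr0 ?add0r //.
  try (apply: (c2vec (z := n + u1 + u2 + u0)); apply/rowP => j; rewrite !mxE; ring).
have pv5a : <<lv (rowl 6 [:: 1; 1; 1; 0; 1; 1]) *m e>>%MS = val (x (inord 5) ord0) by rewrite v5a (pts _).1.
have nv5a : rowl 6 [:: 1; 1; 1; 0; 1; 1] != 0 by apply: (@rowl_ne0 _ _ 0) => //; vm_compute.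
have zv5a : qminus5 (rowl 6 [:: 1; 1; 1; 0; 1; 1]) = 0 by rewrite /qminus5 /rowl !mxE !inordK //=; apply/eqP; vm_compute.
have sv5a : x (inord 5) ord0 \in Sset e qminus5 by apply: (inS nv5a zv5a); rewrite pv5a.
have v5b : lv (rowl 6 [:: 0; 0; 1; 1; 1; 1]) *m e = n + u5.
  rewrite rel /e /E mulMx sum6 !mxE !inordK //= ?rmorph0 ?rmorph1 ?scale0r ?scale1r ?addr0 ?add0r //.
  try (apply: (c2vec (z := n + u1 + u2 + u0)); apply/rowP => j; rewrite !mxE; ring).
have pv5b : <<lv (rowl 6 [:: 0; 0; 1; 1; 1; 1]) *m e>>%MS = val (x (inord 5) ord_max) by rewrite v5b (pts _).2.
have nv5b : rowl 6 [:: 0; 0; 1; 1; 1; 1] != 0 by apply: (@rowl_ne0 _ _ 2) => //; vm_compute.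
have zv5b : qminus5 (rowl 6 [:: 0; 0; 1; 1; 1; 1]) = 0 by rewrite /qminus5 /rowl !mxE !inordK //=; apply/eqP; vm_compute.
have sv5b : x (inord 5) ord_max \in Sset e qminus5 by apply: (inS nv5b zv5b); rewrite pv5b.
have s01 : lv (rowl 6 [:: 0; 0; 0; 1; 0; 0]) *m e = u0 + (n + u1).
  rewrite /e /E mulMx sum6 !mxE !inordK //= ?rmorph0 ?rmorph1 ?scale0r ?scale1r ?addr0 ?add0r //.
  try (apply: (c2vec (z := 0)); apply/rowP => j; rewrite !mxE; ring).
have ns01 : rowl 6 [:: 0; 0; 0; 1; 0; 0] != 0 by apply: (@rowl_ne0 _ _ 3) => //; vm_compute.
have zs01 : qminus5 (rowl 6 [:: 0; 0; 0; 1; 0; 0]) = 0 by rewrite /qminus5 /rowl !mxE !inordK //=; apply/eqP; vm_compute.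
have s12 : lv (rowl 6 [:: 0; 1; 1; 0; 0; 0]) *m e = n + u1 + u2.
  rewrite /e /E mulMx sum6 !mxE !inordK //= ?rmorph0 ?rmorph1 ?scale0r ?scale1r ?addr0 ?add0r //.
  try (apply: (c2vec (z := 0)); apply/rowP => j; rewrite !mxE; ring).
have ns12 : rowl 6 [:: 0; 1; 1; 0; 0; 0] != 0 by apply: (@rowl_ne0 _ _ 1) => //; vm_compute.
have zs12 : qminus5 (rowl 6 [:: 0; 1; 1; 0; 0; 0]) = 0 by rewrite /qminus5 /rowl !mxE !inordK //=; apply/eqP; vm_compute.
have s20 : lv (rowl 6 [:: 1; 0; 1; 0; 0; 0]) *m e = u2 + (n + u0).
  rewrite /e /E mulMx sum6 !mxE !inordK //= ?rmorph0 ?rmorph1 ?scale0r ?scale1r ?addr0 ?add0r //.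
  try (apply: (c2vec (z := 0)); apply/rowP => j; rewrite !mxE; ring).
have ns20 : rowl 6 [:: 1; 0; 1; 0; 0; 0] != 0 by apply: (@rowl_ne0 _ _ 0) => //; vm_compute.
have zs20 : qminus5 (rowl 6 [:: 1; 0; 1; 0; 0; 0]) = 0 by rewrite /qminus5 /rowl !mxE !inordK //=; apply/eqP; vm_compute.
exists (Sset e qminus5); split.
- exact: (S_sub hq).
- exact: S_F2 he.
- exact: S_iso he hc hq.
- apply: (@in_span _ hchar _ _ u0 (n + u1) u2 (n + u0)).
  + by rewrite -v0a; apply: (lv_ne0 he); exact: nv0a.
  + by rewrite -v1b; apply: (lv_ne0 he); exact: nv1b.
  + by rewrite -v2a; apply: (lv_ne0 he); exact: nv2a.
  + by rewrite -v0b; apply: (lv_ne0 he); exact: nv0b.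
  + by rewrite -s01; apply: (lv_ne0 he); exact: ns01.
  + by rewrite -s12; apply: (lv_ne0 he); exact: ns12.
  + by rewrite -s20; apply: (lv_ne0 he); exact: ns20.
  + have -> : u0 + (n + u0) = n by apply: (c2vec (z := u0)); apply/rowP => j; rewrite !mxE; ring.
    exact: nz.
  + rewrite -(pts _).1 -(pts _).2; apply/negP => /eqP/val_inj/hinj[h _]; by rewrite h eqxx in d01.
  + rewrite -(pts _).2 -(pts _).1; apply/negP => /eqP/val_inj/hinj[h _]; by rewrite h eqxx in d12.
  + rewrite -(pts _).1 -(pts _).2; apply/negP => /eqP/val_inj/hinj[h _]; by rewrite h eqxx in d02.
  + move=> v; rewrite !inE.
    case/orP => [/eqP ->|]; first by exists (x (inord 0) ord0) => //; rewrite (pts _).1.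
    case/orP => [/eqP ->|]; first by exists (x (inord 1) ord_max) => //; rewrite (pts _).2.
    case/orP => [/eqP ->|]; first by exists (x (inord 2) ord0) => //; rewrite (pts _).1.
    case/orP => [/eqP ->|]; first by exists (x (inord 0) ord_max) => //; rewrite (pts _).2.
    case/orP => [/eqP ->|]; first by exists (mkpt (lv_ne0 he ns01)); [apply: mkS_in | rewrite /= s01].
    case/orP => [/eqP ->|]; first by exists (mkpt (lv_ne0 he ns12)); [apply: mkS_in | rewrite /= s12].
    move/eqP ->; by exists (mkpt (lv_ne0 he ns20)); [apply: mkS_in | rewrite /= s20].
  + rewrite hn; congr (<<_>>%MS); symmetry; apply: (c2vec (z := u0)); apply/rowP => j; rewrite !mxE; ring.
- apply/setP => p; rewrite inE; apply/imset2P/andP => [[i b _ _ ->]|[pS pH]].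
    split; last exact: (hpt i b).2.
    have [->|->] : b = ord0 \/ b = ord_max by case: b => [[|[|//]] hb]; [left|right]; apply/val_inj.
      by move: i; apply: all6; [exact: sv0a | exact: sv1a | exact: sv2a | exact: sv3a | exact: sv4a | exact: sv5a].
    by move: i; apply: all6; [exact: sv0b | exact: sv1b | exact: sv2b | exact: sv3b | exact: sv4b | exact: sv5b].
  have [ha qa ea] := coordP pS.
  set a := coord e qminus5 p in ha qa ea.
  have hl : a ord0 (inord 0) + a ord0 (inord 1) + a ord0 (inord 2) != 0.
    rewrite -(fmorph_eq0 iota) !rmorphD /=.
    by move: pH; rewrite ea gen_sub perp bfn !mxE mulf_eq0 (negPf hc).
  move/eqP: qa; rewrite {1}(rowl_eta6 a) in ea; move: ea hl; rewrite /qminus5.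
  case: (F2cases (a ord0 (inord 0))) => ->; case: (F2cases (a ord0 (inord 1))) => ->; case: (F2cases (a ord0 (inord 2))) => ->; case: (F2cases (a ord0 (inord 3))) => ->; case: (F2cases (a ord0 (inord 4))) => ->; case: (F2cases (a ord0 (inord 5))) => ->.
  all: move=> ea; rewrite /= => hl hq0; try by [].
  all: rewrite ?(pv0a, pv0b, pv1a, pv1b, pv2a, pv2b, pv3a, pv3b, pv4a, pv4b, pv5a, pv5b) in ea.
  all: by move/val_inj: ea => ->; apply/imset2P; apply: imset2_f.
Qed.
End Main.

Unset Implicit Arguments.
Set Strict Implicit.
Set Printing Implicit Defensive.

Theorem theorem4 (F : finFieldType) (hchar : 2%N \in [pchar F])
  (C : 'M[F]_6) (hnd : qf_nondeg C) (hw : witt_index2 C)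
  (H0 : 'M[F]_6) (hH0 : \rank H0 = 5%N) (hpar : parabolic_section C H0)
  (n0 : ppoint F) (hn0 : (val n0 == perpmx C H0)%MS) :
  [/\ (forall x : 'I_3 -> 'I_2 -> ppoint F, centric C H0 n0 x -> of_form C H0 n0 x qplus3),
      (forall x : 'I_4 -> 'I_2 -> ppoint F, centric C H0 n0 x -> of_form C H0 n0 x qpar4) &
      (forall x : 'I_6 -> 'I_2 -> ppoint F, centric C H0 n0 x -> of_form C H0 n0 x qminus5)].
Proof.
split.
- by move=> x hx; apply: (case3 hchar hH0 hn0 hx).
- by move=> x hx; apply: (case4 hchar hH0 hn0 hx).
- by move=> x hx; apply: (case6 hchar hH0 hn0 hnd hx).
Qed.
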